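(* Let $(t_\varepsilon)_\varepsilon$ be the net defined below. For every compact $K\subseteq\mathbb{R}^2$ and every $\delta>0$ there exist $\eta>0$ and $\varepsilon_0\in(0,1]$ such that every principal minor of the Jacobian matrix $Dt_\varepsilon(U,X^1,X^2,V)$ lies in $(1-\delta,1+\delta)$ for all $(U,X^1,X^2,V)\in(-\infty,\eta]\times K\times\mathbb{R}$ and all $\varepsilon\le\varepsilon_0$. In particular, every principal minor of $Dt_\varepsilon$ is positive on $(-\infty,\eta]\times K\times\mathbb{R}$ for $\varepsilon\le\varepsilon_0$, and $\det\circ DT=[(\det Dt_\varepsilon)_\varepsilon]$ is strictly non-zero on $(-\infty,\eta]\times K\times\mathbb{R}$.
   Context: A net $(u_\varepsilon)_\varepsilon$ is strictly non-zero on a set $A$ if there exist $C>0$, $N\in\mathbb{N}$, $\varepsilon_0\in(0,1]$ with $\inf_{x\in A}|u_\varepsilon(x)|\ge C\varepsilon^N$ for all $\varepsilon\le\varepsilon_0$. Strict delta net: a net $(\delta_\varepsilon)_{\varepsilon\in(0,1]}$ of smooth compactly supported functions on $\mathbb{R}$ with $\operatorname{supp}\delta_\varepsilon\subseteq[-\varepsilon,\varepsilon]$, $\int\delta_\varepsilon\to1$ as $\varepsilon\to0$, and $\int|\delta_\varepsilon|\le C$ for some $C>0$ and small $\varepsilon$. The transformation: fix $f\in C^\infty(\mathbb{R}^2,\mathbb{R})$ and a strict delta net $(\delta_\varepsilon)_\varepsilon$; write $X=(X^1,X^2)$. Let $(x_\varepsilon)_\varepsilon=(x_\varepsilon^1,x_\varepsilon^2)_\varepsilon\in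 C^\infty(\mathbb{R}^2\times\mathbb{R},\mathbb{R}^2)^{(0,1]}$ be a fixed net such that for every compact $K\subseteq\mathbb{R}^2$ there is $\varepsilon_K$ such that for all $X\in K$ and $\varepsilon\le\varepsilon_K$, $U\mapsto x_\varepsilon(X,U)$ is the solution on all of $\mathbb{R}$ of $\partial_U^2x_\varepsilon^i(X,U)=\frac12\partial_if(x_\varepsilon(X,U))\,\delta_\varepsilon(U)$, $x_\varepsilon^i(X,-1)=X^i$, $\partial_Ux_\varepsilon^i(X,-1)=0$ ($i=1,2$) (such a net exists). Write $\dot x_\varepsilon^i=\partial_U x_\varepsilon^i$. Define $$v_\varepsilon(X,V,U)=V+\int_{-\varepsilon}^U f(x_\varepsilon(X,s))\delta_\varepsilon(s)\,ds+\int_{-\varepsilon}^U\int_{-\varepsilon}^s\sum_{i=1}^2\partial_if(x_\varepsilon(X,r))\,\dot x_\varepsilon^i(X,r)\,\delta_\varepsilon(r)\,dr\,ds,$$ and $t_\varepsilon:\mathbb{R}^4\to\mathbb{R}^4$, $t_\varepsilon(U,X^1,X^2,V)=(U,x_\varepsilon^1(X,U),x_\varepsilon^2(X,U),v_\varepsilon(X,V,U))$; $T:=[(t_\varepsilon)_\varepsilon]$, a Colombeau generalized function on $\mathbb{R}^4$ with values in $\mathbb{R}^4$. *)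

(* Defs.v *)
From Stdlib Require Import Reals List ClassicalEpsilon.
Import ListNotations.
Open Scope R_scope.

(** Points of R^d are encoded as functions [nat -> R]; only coordinates
    [0 .. d-1] are relevant. *)
Definition pt := nat -> R.

Definition upd (p : pt) (k : nat) (s : R) : pt :=
  fun i => if Nat.eqb i k then s else p i.

Definition has_partial (g : pt -> R) (k : nat) (p : pt) (l : R) : Prop :=
  derivable_pt_lim (fun s => g (upd p k s)) (p k) l.

Definition cont_at (d : nat) (g : pt -> R) (p : pt) : Prop :=
  forall e, 0 < e -> exists del, 0 < del /\
    forall q, (forall i, (i < d)%nat -> Rabs (q i - p i) < del) ->
              (forall i, (d <= i)%nat -> q i = p i) ->
              Rabs (g q - g p) < e.

Fixpoint Ck (k d : nat) (g : pt -> R) : Prop :=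
  match k with
  | O => forall p, cont_at d g p
  | S k' => (forall p, cont_at d g p) /\
            forall i, (i < d)%nat -> exists gi : pt -> R,
              (forall p, has_partial g i p (gi p)) /\ Ck k' d gi
  end.

Definition smooth (d : nat) (g : pt -> R) : Prop := forall k, Ck k d g.

(** Total version of the (oriented) Riemann integral: the value of
    [RiemannInt] when [g] is Riemann integrable on [a,b] (oriented). *)
Definition RInt (g : R -> R) (a b : R) : R :=
  epsilon (inhabits 0)
    (fun I => exists pr : Riemann_integrable g a b, RiemannInt pr = I).

(** Compact subsets of R^2 (closed and bounded, Heine-Borel). *)
Definition compact2 (K : R -> R -> Prop) : Prop :=
  (exists M, forall a b, K a b -> Rabs a <= M /\ Rabs b <= M) /\
  (forall a b, (forall e, 0 < e -> exists a' b', K a' b' /\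
                   Rabs (a - a') < e /\ Rabs (b - b') < e) -> K a b).

Definition strict_delta_net (delta : R -> R -> R) : Prop :=
  (forall eps, 0 < eps <= 1 -> smooth 1 (fun p => delta eps (p O))) /\
  (forall eps s, 0 < eps <= 1 -> delta eps s <> 0 -> - eps <= s <= eps) /\
  (forall e, 0 < e -> exists e0, 0 < e0 /\ forall eps, 0 < eps <= 1 -> eps < e0 ->
       Rabs (RInt (delta eps) (- eps) eps - 1) < e) /\
  (exists C e0, 0 < C /\ 0 < e0 /\ forall eps, 0 < eps <= 1 -> eps < e0 ->
       RInt (fun s => Rabs (delta eps s)) (- eps) eps <= C).

Fixpoint detl (M : nat -> nat -> R) (rows cols : list nat) : R :=
  match rows with
  | [] => 1
  | r :: rs =>
      fold_right Rplus 0
        (map (fun k => (-1) ^ k * M r (nth k cols O) *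
                       detl M rs (firstn k cols ++ skipn (S k) cols))
             (seq 0 (length cols)))
  end.

Definition principal_index (S : list nat) : Prop :=
  S <> [] /\ NoDup S /\ Forall (fun i => (i < 4)%nat) S.

Definition principal_minor (M : nat -> nat -> R) (S : list nat) : R :=
  detl M S S.

Definition is_jacobian4 (F : nat -> pt -> R) (p : pt) (J : nat -> nat -> R)
  : Prop :=
  forall i j, (i < 4)%nat -> (j < 4)%nat -> has_partial (F i) j p (J i j).

(** The function v_eps(X,V,U). [x1 eps X1 X2 U], [x1d] = d/dU x1, etc.;
    [f1], [f2] are the partial derivatives of [f]. *)
Definition v_eps (f f1 f2 : R -> R -> R) (delta : R -> R -> R)
  (x1 x2 x1d x2d : R -> R -> R -> R -> R) (eps X1 X2 V U : R) : R :=
  V + RInt (fun s => f (x1 eps X1 X2 s) (x2 eps X1 X2 s) * delta eps s) (- eps) U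
    + RInt (fun s => RInt (fun r =>
              (f1 (x1 eps X1 X2 r) (x2 eps X1 X2 r) * x1d eps X1 X2 r
             + f2 (x1 eps X1 X2 r) (x2 eps X1 X2 r) * x2d eps X1 X2 r)
             * delta eps r) (- eps) s) (- eps) U.

(** Components of t_eps(U,X1,X2,V); coordinates: 0 = U, 1 = X1, 2 = X2, 3 = V. *)
Definition t_eps (f f1 f2 : R -> R -> R) (delta : R -> R -> R)
  (x1 x2 x1d x2d : R -> R -> R -> R -> R) (eps : R) (i : nat) (p : pt) : R :=
  match i with
  | O => p O
  | 1%nat => x1 eps (p 1%nat) (p 2%nat) (p O)
  | 2%nat => x2 eps (p 1%nat) (p 2%nat) (p O)
  | _ => v_eps f f1 f2 delta x1 x2 x1d x2d eps (p 1%nat) (p 2%nat) (p 3%nat) (p O)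
  end.

Definition mkpt4 (U X1 X2 V : R) : pt :=
  fun i => match i with O => U | 1%nat => X1 | 2%nat => X2 | 3%nat => V | _ => 0 end.

(* Main.v *)
Require Import Defs.
From Stdlib Require Import Reals Lra Lia List Psatz ClassicalEpsilon Classical FunctionalExtensionality.
Import ListNotations.
Open Scope R_scope.

Lemma glue (a b : R) (L : R -> R -> Prop) :
  a <= b ->
  (forall c d e, a <= c -> c <= d -> d <= e -> e <= b -> L c d -> L d e -> L c e) ->
  (forall s, a <= s <= b -> exists r, 0 < r /\ forall c d, a <= c -> c <= d -> d <= b ->
       s - r < c -> d < s + r -> L c d) ->
  L a b.
Proof.
  intros hab hg hl.
  set (S := fun x => a <= x <= b /\ L a x).
  assert (HSa : S a).
  { split; [lra|]. destruct (hl a ltac:(lra)) as [r [hr H]]. apply H; lra. }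
  assert (Hb : bound S). { exists b. intros x [[? ?] _]. lra. }
  destruct (completeness S Hb (ex_intro _ a HSa)) as [m [Hub Hlub]].
  assert (ham : a <= m) by (apply Hub; exact HSa).
  assert (hmb : m <= b) by (apply Hlub; intros x [[? ?] _]; lra).
  destruct (hl m ltac:(lra)) as [r [hr H]].
  assert (Hc : exists c, S c /\ m - r < c).
  { apply NNPP; intro Hn.
    assert (m <= m - r); [|lra].
    apply Hlub. intros x Hx. destruct (Rle_dec x (m - r)) as [?|Hx']; [auto|].
    exfalso; apply Hn; exists x; split; auto; lra. }
  destruct Hc as [c [[[hac hcb] hLc] hcm]].
  assert (hcm' : c <= m) by (apply Hub; split; [lra|auto]).
  set (d := Rmin b (m + r / 2)).
  assert (hd1 : d <= b) by apply Rmin_l.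
  assert (hd2 : d <= m + r/2) by apply Rmin_r.
  assert (hd3 : m <= d) by (unfold d; apply Rmin_glb; lra).
  assert (hLd : L a d).
  { apply (hg a c d); try lra. auto. apply H; lra. }
  destruct (Rle_dec b (m + r/2)) as [h1|h1].
  - unfold d in hLd. rewrite Rmin_left in hLd by lra. exact hLd.
  - unfold d in hd3, hLd |- *. rewrite Rmin_right in hLd by lra.
    assert (m + r/2 <= m); [|lra]. apply Hub. split; [lra|auto].
Qed.

Definition cont (f : R -> R) := forall x, continuity_pt f x.

Lemma integ f a b : cont f -> Riemann_integrable f a b.
Proof.
  intros hf. destruct (Rle_dec a b).
  - apply continuity_implies_RiemannInt; auto.
  - apply RiemannInt_P1, continuity_implies_RiemannInt; [lra|auto].
Qed.

Lemma RInt_eq f a b (pr : Riemann_integrable f a b) : RInt f a b = RiemannInt pr.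
Proof.
  unfold RInt.
  destruct (epsilon_spec (inhabits 0)
     (fun I => exists pr : Riemann_integrable f a b, RiemannInt pr = I)
     (ex_intro _ _ (ex_intro _ pr eq_refl))) as [pr' Hp].
  rewrite <- Hp. apply RiemannInt_P5.
Qed.

Lemma RInt_chasles f a b c : cont f -> RInt f a b + RInt f b c = RInt f a c.
Proof.
  intros hf. rewrite (RInt_eq _ _ _ (integ f a b hf)), (RInt_eq _ _ _ (integ f b c hf)),
    (RInt_eq _ _ _ (integ f a c hf)). apply RiemannInt_P26.
Qed.

Lemma RInt_aa f a : cont f -> RInt f a a = 0.
Proof. intros hf. rewrite (RInt_eq _ _ _ (integ f a a hf)). apply RiemannInt_P9. Qed.

Lemma RInt_deriv f a u : cont f -> derivable_pt_lim (fun x => RInt f a x) u (f u).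
Proof.
  intros hf.
  set (lo := Rmin a u - 1). set (hi := Rmax a u + 1).
  assert (h1 : lo <= a) by (unfold lo; generalize (Rmin_l a u); lra).
  assert (h2 : lo <= u) by (unfold lo; generalize (Rmin_r a u); lra).
  assert (h3 : a <= hi) by (unfold hi; generalize (Rmax_l a u); lra).
  assert (h4 : u <= hi) by (unfold hi; generalize (Rmax_r a u); lra).
  assert (h : lo <= hi) by lra.
  assert (h2' : lo < u) by (unfold lo; generalize (Rmin_r a u); lra).
  assert (h4' : u < hi) by (unfold hi; generalize (Rmax_r a u); lra).
  assert (C0 : forall x, lo <= x <= hi -> continuity_pt f x) by auto.
  set (P := primitive h (FTC_P1 h C0)).
  assert (HP : forall x, lo <= x <= hi -> P x = RInt f lo x).
  { intros x hx. unfold P, primitive.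
    destruct (Rle_dec lo x); [|lra]. destruct (Rle_dec x hi); [|lra].
    symmetry. apply RInt_eq. }
  apply (derivable_pt_lim_locally_ext (fun x => P x - P a) _ u lo hi).
  - lra.
  - intros z hz. rewrite !HP by lra.
    rewrite <- (RInt_chasles f lo a z hf). ring.
  - replace (f u) with (f u - 0) by ring.
    apply derivable_pt_lim_minus.
    + apply RiemannInt_P28; lra.
    + apply derivable_pt_lim_const.
Qed.

Lemma incr_deriv F F' a b : a <= b ->
  (forall c, a <= c <= b -> derivable_pt_lim F c (F' c)) ->
  (forall c, a <= c <= b -> 0 <= F' c) -> F a <= F b.
Proof.
  intros hab hd hp. destruct (Req_dec a b) as [->|hne]; [lra|].
  destruct (MVT_cor2 F F' a b ltac:(lra) hd) as [c [Hc Hc']].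
  assert (0 <= F' c * (b - a)) by (apply Rmult_le_pos; [apply hp; lra|lra]). lra.
Qed.

Lemma const_deriv F a b : (forall c, derivable_pt_lim F c 0) -> F a = F b.
Proof.
  intros hd.
  assert (forall x y, x <= y -> F x <= F y /\ F y <= F x).
  { intros x y hxy. split.
    - apply (incr_deriv F (fun _ => 0)); auto; intros; lra.
    - assert (- F x <= - F y); [|lra].
      apply (incr_deriv (fun z => - F z) (fun _ => 0)); auto; intros.
      replace 0 with (- 0) by ring. apply derivable_pt_lim_opp. auto. lra. }
  destruct (Rle_dec a b); [destruct (H a b)|destruct (H b a)]; lra.
Qed.

Lemma RInt_FTC F F' a b : cont F' -> (forall x, derivable_pt_lim F x (F' x)) ->
  RInt F' a b = F b - F a.
Proof.
  intros hc hd.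
  assert (E := const_deriv (fun x => RInt F' a x - F x) a b).
  cbv beta in E; rewrite RInt_aa in E by auto.
  assert (RInt F' a b - F b = 0 - F a); [|lra].
  symmetry; apply E. intros c.
  replace 0 with (F' c - F' c) by ring.
  apply derivable_pt_lim_minus; [apply RInt_deriv; auto | auto].
Qed.

Lemma cont_plus f g : cont f -> cont g -> cont (fun x => f x + g x).
Proof. intros hf hg x. apply continuity_pt_plus; auto. Qed.
Lemma cont_mult f g : cont f -> cont g -> cont (fun x => f x * g x).
Proof. intros hf hg x. apply continuity_pt_mult; auto. Qed.
Lemma cont_const c : cont (fun _ => c).
Proof. intros x. apply continuity_pt_const. intros ? ?; auto. Qed.

Lemma RInt_lin f g k a b : cont f -> cont g ->
  RInt (fun x => f x + k * g x) a b = RInt f a b + k * RInt g a b.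
Proof.
  intros hf hg.
  assert (hc : cont (fun x => f x + k * g x)).
  { apply cont_plus; auto. apply cont_mult; auto. apply cont_const. }
  assert (E := const_deriv (fun x => RInt (fun x => f x + k * g x) a x - (RInt f a x + k * RInt g a x)) a b).
  cbv beta in E; rewrite !RInt_aa in E by auto.
  assert (RInt (fun x => f x + k * g x) a b - (RInt f a b + k * RInt g a b) = 0); [|lra].
  rewrite <- E; [ring|]. intros c.
  replace 0 with ((f c + k * g c) - (f c + k * g c)) by ring.
  apply derivable_pt_lim_minus; [apply (RInt_deriv (fun x => f x + k * g x)); auto|].
  apply derivable_pt_lim_plus; [apply RInt_deriv; auto|].
  replace (k * g c) with (0 * RInt g a c + k * g c) by ring.
  apply (derivable_pt_lim_mult (fun _ => k)); [apply derivable_pt_lim_const|apply RInt_deriv; auto].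
Qed.

Lemma RInt_bound f a b M : cont f ->
  (forall x, Rmin a b <= x <= Rmax a b -> Rabs (f x) <= M) ->
  Rabs (RInt f a b) <= M * Rabs (b - a).
Proof.
  intros hf hb.
  destruct (MVT_abs (fun x => RInt f a x) f a b) as [c [Hc Hc']].
  { intros; apply RInt_deriv; auto. }
  rewrite RInt_aa in Hc by auto. rewrite Rminus_0_r in Hc. rewrite Hc.
  apply Rmult_le_compat_r; [apply Rabs_pos|]. auto.
Qed.

Lemma RInt_ext f g a b : (forall x, f x = g x) -> RInt f a b = RInt g a b.
Proof.
  intros H. assert (f = g) by (apply functional_extensionality; auto). subst; auto.
Qed.

Definition jc2 (F : R -> R -> R) a b := forall e, 0 < e -> exists d, 0 < d /\
  forall a' b', Rabs (a' - a) < d -> Rabs (b' - b) < d -> Rabs (F a' b' - F a b) < e.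
Definition jc3 (F : R -> R -> R -> R) a b c := forall e, 0 < e -> exists d, 0 < d /\
  forall a' b' c', Rabs (a' - a) < d -> Rabs (b' - b) < d -> Rabs (c' - c) < d ->
    Rabs (F a' b' c' - F a b c) < e.

Definition mk2 (a b : R) : pt := fun i => match i with O => a | 1%nat => b | _ => 0 end.
Definition mk3 (a b c : R) : pt :=
  fun i => match i with O => a | 1%nat => b | 2%nat => c | _ => 0 end.

Lemma upd_mk2_0 a b s : upd (mk2 a b) 0 s = mk2 s b.
Proof. apply functional_extensionality; intros [|[|]]; reflexivity. Qed.
Lemma upd_mk2_1 a b s : upd (mk2 a b) 1 s = mk2 a s.
Proof. apply functional_extensionality; intros [|[|]]; reflexivity. Qed.
Lemma upd_mk3_0 a b c s : upd (mk3 a b c) 0 s = mk3 s b c.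
Proof. apply functional_extensionality; intros [|[|[|]]]; reflexivity. Qed.
Lemma upd_mk3_1 a b c s : upd (mk3 a b c) 1 s = mk3 a s c.
Proof. apply functional_extensionality; intros [|[|[|]]]; reflexivity. Qed.
Lemma upd_mk3_2 a b c s : upd (mk3 a b c) 2 s = mk3 a b s.
Proof. apply functional_extensionality; intros [|[|[|]]]; reflexivity. Qed.

Lemma cont2_jc (g : pt -> R) a b : cont_at 2 g (mk2 a b) ->
  jc2 (fun a b => g (mk2 a b)) a b.
Proof.
  intros H e he. destruct (H e he) as [d [hd Hd]]. exists d; split; auto.
  intros a' b' ha hb. apply Hd.
  - intros [|[|]] hi; simpl; auto; lia.
  - intros [|[|]] hi; simpl; auto; lia.
Qed.

Lemma cont3_jc (g : pt -> R) a b c : cont_at 3 g (mk3 a b c) ->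
  jc3 (fun a b c => g (mk3 a b c)) a b c.
Proof.
  intros H e he. destruct (H e he) as [d [hd Hd]]. exists d; split; auto.
  intros a' b' c' ha hb hc. apply Hd.
  - intros [|[|[|]]] hi; simpl; auto; lia.
  - intros [|[|[|]]] hi; simpl; auto; lia.
Qed.

Lemma C2_2 (F : R -> R -> R) : Ck 2 2 (fun p => F (p O) (p 1%nat)) ->
  exists F1 F2 F11 F12 F21 F22 : R -> R -> R,
   (forall a b, jc2 F a b) /\ (forall a b, jc2 F1 a b) /\ (forall a b, jc2 F2 a b) /\
   (forall a b, jc2 F11 a b) /\ (forall a b, jc2 F12 a b) /\
   (forall a b, jc2 F21 a b) /\ (forall a b, jc2 F22 a b) /\
   (forall a b, derivable_pt_lim (fun s => F s b) a (F1 a b)) /\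
   (forall a b, derivable_pt_lim (fun s => F a s) b (F2 a b)) /\
   (forall a b, derivable_pt_lim (fun s => F1 s b) a (F11 a b)) /\
   (forall a b, derivable_pt_lim (fun s => F1 a s) b (F12 a b)) /\
   (forall a b, derivable_pt_lim (fun s => F2 s b) a (F21 a b)) /\
   (forall a b, derivable_pt_lim (fun s => F2 a s) b (F22 a b)).
Proof.
  simpl. intros [Hc Hp].
  destruct (Hp 0%nat ltac:(lia)) as [g0 [Hg0 [Hc0 Hp0]]].
  destruct (Hp 1%nat ltac:(lia)) as [g1 [Hg1 [Hc1 Hp1]]].
  destruct (Hp0 0%nat ltac:(lia)) as [g00 [Hg00 Hc00]].
  destruct (Hp0 1%nat ltac:(lia)) as [g01 [Hg01 Hc01]].
  destruct (Hp1 0%nat ltac:(lia)) as [g10 [Hg10 Hc10]].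
  destruct (Hp1 1%nat ltac:(lia)) as [g11 [Hg11 Hc11]].
  exists (fun a b => g0 (mk2 a b)), (fun a b => g1 (mk2 a b)),
    (fun a b => g00 (mk2 a b)), (fun a b => g01 (mk2 a b)),
    (fun a b => g10 (mk2 a b)), (fun a b => g11 (mk2 a b)).
  repeat split; intros;
   try (apply (cont2_jc (fun p => F (p O) (p 1%nat))); apply Hc);
   try (apply cont2_jc; auto).
  - generalize (Hg0 (mk2 a b)); unfold has_partial; simpl; auto.
  - generalize (Hg1 (mk2 a b)); unfold has_partial; simpl; auto.
  - generalize (Hg00 (mk2 a b)); unfold has_partial. simpl.
    intro H. eapply derivable_pt_lim_ext; [|exact H]. intros; simpl. now rewrite upd_mk2_0.
  - generalize (Hg01 (mk2 a b)); unfold has_partial. simpl.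
    intro H. eapply derivable_pt_lim_ext; [|exact H]. intros; simpl. now rewrite upd_mk2_1.
  - generalize (Hg10 (mk2 a b)); unfold has_partial. simpl.
    intro H. eapply derivable_pt_lim_ext; [|exact H]. intros; simpl. now rewrite upd_mk2_0.
  - generalize (Hg11 (mk2 a b)); unfold has_partial. simpl.
    intro H. eapply derivable_pt_lim_ext; [|exact H]. intros; simpl. now rewrite upd_mk2_1.
Qed.

Lemma C2_3 (F : R -> R -> R -> R) : Ck 2 3 (fun p => F (p O) (p 1%nat) (p 2%nat)) ->
  exists F1 F2 F3 F31 F32 : R -> R -> R -> R,
   (forall a b c, jc3 F a b c) /\ (forall a b c, jc3 F1 a b c) /\ (forall a b c, jc3 F2 a b c) /\
   (forall a b c, jc3 F3 a b c) /\ (forall a b c, jc3 F31 a b c) /\ (forall a b c, jc3 F32 a b c) /\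
   (forall a b c, derivable_pt_lim (fun s => F s b c) a (F1 a b c)) /\
   (forall a b c, derivable_pt_lim (fun s => F a s c) b (F2 a b c)) /\
   (forall a b c, derivable_pt_lim (fun s => F a b s) c (F3 a b c)) /\
   (forall a b c, derivable_pt_lim (fun s => F3 s b c) a (F31 a b c)) /\
   (forall a b c, derivable_pt_lim (fun s => F3 a s c) b (F32 a b c)).
Proof.
  simpl. intros [Hc Hp].
  destruct (Hp 0%nat ltac:(lia)) as [g0 [Hg0 [Hc0 _]]].
  destruct (Hp 1%nat ltac:(lia)) as [g1 [Hg1 [Hc1 _]]].
  destruct (Hp 2%nat ltac:(lia)) as [g2 [Hg2 [Hc2 Hp2]]].
  destruct (Hp2 0%nat ltac:(lia)) as [g20 [Hg20 Hc20]].
  destruct (Hp2 1%nat ltac:(lia)) as [g21 [Hg21 Hc21]].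
  exists (fun a b c => g0 (mk3 a b c)), (fun a b c => g1 (mk3 a b c)),
    (fun a b c => g2 (mk3 a b c)), (fun a b c => g20 (mk3 a b c)),
    (fun a b c => g21 (mk3 a b c)).
  repeat split; intros;
   try (apply (cont3_jc (fun p => F (p O) (p 1%nat) (p 2%nat))); apply Hc);
   try (apply cont3_jc; auto).
  - generalize (Hg0 (mk3 a b c)); unfold has_partial; simpl; auto.
  - generalize (Hg1 (mk3 a b c)); unfold has_partial; simpl; auto.
  - generalize (Hg2 (mk3 a b c)); unfold has_partial; simpl; auto.
  - generalize (Hg20 (mk3 a b c)); unfold has_partial. simpl.
    intro H. eapply derivable_pt_lim_ext; [|exact H]. intros; simpl. now rewrite upd_mk3_0.
  - generalize (Hg21 (mk3 a b c)); unfold has_partial. simpl.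
    intro H. eapply derivable_pt_lim_ext; [|exact H]. intros; simpl. now rewrite upd_mk3_1.
Qed.

Lemma jc2_plus F G a b : jc2 F a b -> jc2 G a b -> jc2 (fun a b => F a b + G a b) a b.
Proof.
  intros hF hG e he. destruct (hF (e/2) ltac:(lra)) as [d1 [h1 H1]].
  destruct (hG (e/2) ltac:(lra)) as [d2 [h2 H2]].
  exists (Rmin d1 d2); split; [apply Rmin_pos; auto|]. intros a' b' ha hb.
  assert (ha1 : Rabs (a' - a) < d1) by (generalize (Rmin_l d1 d2); lra).
  assert (ha2 : Rabs (a' - a) < d2) by (generalize (Rmin_r d1 d2); lra).
  assert (hb1 : Rabs (b' - b) < d1) by (generalize (Rmin_l d1 d2); lra).
  assert (hb2 : Rabs (b' - b) < d2) by (generalize (Rmin_r d1 d2); lra).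
  specialize (H1 _ _ ha1 hb1). specialize (H2 _ _ ha2 hb2).
  replace (F a' b' + G a' b' - (F a b + G a b)) with ((F a' b' - F a b) + (G a' b' - G a b)) by ring.
  eapply Rle_lt_trans; [apply Rabs_triang|lra].
Qed.

Lemma jc2_mult F G a b : jc2 F a b -> jc2 G a b -> jc2 (fun a b => F a b * G a b) a b.
Proof.
  intros hF hG e he.
  set (M := Rabs (F a b) + Rabs (G a b) + 1).
  assert (hM : 0 < M) by (unfold M; generalize (Rabs_pos (F a b)) (Rabs_pos (G a b)); lra).
  set (e' := Rmin 1 (e / (2 * M + 1))).
  assert (he' : 0 < e') by (apply Rmin_pos; [lra|apply Rdiv_lt_0_compat; lra]).
  destruct (hF e' he') as [d1 [h1 H1]]. destruct (hG e' he') as [d2 [h2 H2]].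
  exists (Rmin d1 d2); split; [apply Rmin_pos; auto|]. intros a' b' ha hb.
  assert (ha1 : Rabs (a' - a) < d1) by (generalize (Rmin_l d1 d2); lra).
  assert (ha2 : Rabs (a' - a) < d2) by (generalize (Rmin_r d1 d2); lra).
  assert (hb1 : Rabs (b' - b) < d1) by (generalize (Rmin_l d1 d2); lra).
  assert (hb2 : Rabs (b' - b) < d2) by (generalize (Rmin_r d1 d2); lra).
  specialize (H1 _ _ ha1 hb1). specialize (H2 _ _ ha2 hb2).
  assert (e'1 : e' <= 1) by apply Rmin_l.
  assert (e'2 : e' <= e / (2 * M + 1)) by apply Rmin_r.
  assert (e'3 : e' * (2 * M + 1) <= e).
  { apply (Rmult_le_compat_r (2*M+1)) in e'2; [|lra].
    unfold Rdiv in e'2. rewrite Rmult_assoc, Rinv_l in e'2 by lra. lra. }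
  replace (F a' b' * G a' b' - F a b * G a b) with
    ((F a' b' - F a b) * (G a' b' - G a b) + (F a' b' - F a b) * G a b + F a b * (G a' b' - G a b)) by ring.
  eapply Rle_lt_trans; [apply Rabs_triang|].
  eapply Rle_lt_trans; [apply Rplus_le_compat_r, Rabs_triang|].
  rewrite !Rabs_mult.
  assert (Rabs (F a' b' - F a b) * Rabs (G a' b' - G a b) <= e' * e').
  { apply Rmult_le_compat; try apply Rabs_pos; lra. }
  assert (Rabs (F a' b' - F a b) * Rabs (G a b) <= e' * Rabs (G a b)).
  { apply Rmult_le_compat_r; [apply Rabs_pos|lra]. }
  assert (Rabs (F a b) * Rabs (G a' b' - G a b) <= Rabs (F a b) * e').
  { apply Rmult_le_compat_l; [apply Rabs_pos|lra]. }
  assert (e' * e' <= e' * 1) by (apply Rmult_le_compat_l; lra).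
  assert (e' * (Rabs (G a b) + Rabs (F a b) + 1) < e' * (2 * M + 1)).
  { apply Rmult_lt_compat_l; auto. unfold M; generalize (Rabs_pos (F a b)) (Rabs_pos (G a b)); lra. }
  nra.
Qed.

Lemma jc2_const c a b : jc2 (fun _ _ => c) a b.
Proof. intros e he; exists 1; split; [lra|]; intros; rewrite Rminus_diag, Rabs_R0; auto. Qed.

Lemma jc2_comp (g : R -> R -> R) (P Q : R -> R -> R) a b :
  jc2 g (P a b) (Q a b) -> jc2 P a b -> jc2 Q a b ->
  jc2 (fun a b => g (P a b) (Q a b)) a b.
Proof.
  intros hg hP hQ e he. destruct (hg e he) as [d [hd Hd]].
  destruct (hP d hd) as [d1 [h1 H1]]. destruct (hQ d hd) as [d2 [h2 H2]].
  exists (Rmin d1 d2); split; [apply Rmin_pos; auto|]. intros a' b' ha hb.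
  apply Hd.
  - apply H1; generalize (Rmin_l d1 d2) (Rmin_r d1 d2); lra.
  - apply H2; generalize (Rmin_l d1 d2) (Rmin_r d1 d2); lra.
Qed.

Lemma jc2_of1 (h : R -> R) a b : continuity_pt h b -> jc2 (fun _ b => h b) a b.
Proof.
  intros H e he. destruct (H e he) as [d [hd Hd]]. exists d; split; auto.
  intros a' b' ha hb. destruct (Req_dec b' b) as [->|hne].
  - rewrite Rminus_diag, Rabs_R0; auto.
  - apply (Hd b'). split; [split; [exact I|auto]|]. simpl; unfold Rdist. auto.
Qed.

Lemma abs_le_inv a b : Rabs a <= b -> -b <= a <= b.
Proof. unfold Rabs; destruct Rcase_abs; lra. Qed.

Lemma bounded2 (F : R -> R -> R) (Rr : R) : (forall a b, jc2 F a b) ->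
  exists B, 0 <= B /\ forall a b, Rabs a <= Rr -> Rabs b <= Rr -> Rabs (F a b) <= B.
Proof.
  intros hF.
  destruct (Rle_dec 0 Rr) as [hR|hR]; cycle 1.
  { exists 0; split; [lra|]; intros a b ha. generalize (Rabs_pos a); lra. }
  assert (inner : forall a0, exists r B, 0 < r /\ forall a b, Rabs (a - a0) < r ->
     -Rr <= b <= Rr -> Rabs (F a b) <= B).
  { intros a0.
    set (L := fun c d => exists r B, 0 < r /\ forall a b, Rabs (a - a0) < r -> c <= b <= d -> Rabs (F a b) <= B).
    change (L (-Rr) Rr). apply glue; [lra| |].
    - intros c d e _ _ _ _ [r1 [B1 [h1 H1]]] [r2 [B2 [h2 H2]]].
      exists (Rmin r1 r2), (Rmax B1 B2); split; [apply Rmin_pos; auto|].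
      intros a b ha hb. destruct (Rle_dec b d).
      + eapply Rle_trans; [apply H1|apply Rmax_l]; [generalize (Rmin_l r1 r2); lra|lra].
      + eapply Rle_trans; [apply H2|apply Rmax_r]; [generalize (Rmin_r r1 r2); lra|lra].
    - intros s hs. destruct (hF a0 s 1 ltac:(lra)) as [d [hd Hd]].
      exists d; split; auto. intros c e' _ _ _ hc he.
      exists d, (Rabs (F a0 s) + 1); split; auto. intros a b ha hb.
      assert (Rabs (F a b - F a0 s) < 1) by (apply Hd; auto; apply Rabs_def1; lra).
      assert (Rabs (F a b) <= Rabs (F a b - F a0 s) + Rabs (F a0 s)).
      { replace (F a b) with ((F a b - F a0 s) + F a0 s) at 1 by ring. apply Rabs_triang. }
      lra. }
  set (L := fun c d => exists B, forall a b, c <= a <= d -> -Rr <= b <= Rr -> Rabs (F a b) <= B).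
  assert (H : L (-Rr) Rr).
  { apply glue; [lra| |].
    - intros c d e _ _ _ _ [B1 H1] [B2 H2]. exists (Rmax B1 B2).
      intros a b ha hb. destruct (Rle_dec a d).
      + eapply Rle_trans; [apply H1|apply Rmax_l]; lra.
      + eapply Rle_trans; [apply H2|apply Rmax_r]; lra.
    - intros s hs. destruct (inner s) as [r [B [hr Hr]]]. exists r; split; auto.
      intros c d _ _ _ hc hd. exists B. intros a b ha hb. apply Hr; auto. apply Rabs_def1; lra. }
  destruct H as [B HB]. exists (Rmax 0 B); split; [apply Rmax_l|].
  intros a b ha hb. apply abs_le_inv in ha. apply abs_le_inv in hb.
  eapply Rle_trans; [apply HB; lra|apply Rmax_r].
Qed.

Lemma unif (G1 : R -> R -> R) a b : a <= b -> (forall s, jc2 G1 0 s) ->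
  forall e, 0 < e -> exists d, 0 < d /\ forall s t, a <= s <= b -> Rabs t < d ->
    Rabs (G1 t s - G1 0 s) < e.
Proof.
  intros hab hG e he.
  set (L := fun c d => exists r, 0 < r /\ forall s t, c <= s <= d -> Rabs t < r ->
    Rabs (G1 t s - G1 0 s) < e).
  change (L a b). apply glue; auto.
  - intros c d e' _ _ _ _ [r1 [h1 H1]] [r2 [h2 H2]].
    exists (Rmin r1 r2); split; [apply Rmin_pos; auto|]. intros s t hs ht.
    destruct (Rle_dec s d).
    + apply H1; [lra|generalize (Rmin_l r1 r2); lra].
    + apply H2; [lra|generalize (Rmin_r r1 r2); lra].
  - intros s0 hs0. destruct (hG s0 (e/2) ltac:(lra)) as [d [hd Hd]].
    exists d; split; auto. intros c d' _ _ _ hc hd'. exists d; split; auto.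
    intros s t hs ht.
    assert (A1 : Rabs (G1 t s - G1 0 s0) < e/2) by (apply Hd; [rewrite Rminus_0_r; auto|apply Rabs_def1; lra]).
    assert (A2 : Rabs (G1 0 s - G1 0 s0) < e/2) by (apply Hd; [rewrite Rminus_diag, Rabs_R0; auto|apply Rabs_def1; lra]).
    replace (G1 t s - G1 0 s) with ((G1 t s - G1 0 s0) - (G1 0 s - G1 0 s0)) by ring.
    eapply Rle_lt_trans; [apply Rabs_triang|]. rewrite Rabs_Ropp. lra.
Qed.

Lemma jc2_cont F a b : jc2 F a b -> continuity_pt (F a) b.
Proof.
  intros H e he. destruct (H e he) as [d [hd Hd]]. exists d; split; auto.
  intros x [_ hx]. simpl in *. unfold Rdist in *. apply Hd; auto.
  rewrite Rminus_diag, Rabs_R0; auto.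
Qed.

Lemma RInt_scal k f a b : cont f -> RInt (fun x => k * f x) a b = k * RInt f a b.
Proof.
  intros hf. rewrite <- (RInt_ext (fun x => 0 + k * f x)) by (intros; ring).
  rewrite RInt_lin by (auto; apply cont_const).
  rewrite (RInt_FTC (fun _ => 0) (fun _ => 0)); [ring|apply cont_const|].
  intros; apply derivable_pt_lim_const.
Qed.

Lemma RInt_minus f g a b : cont f -> cont g ->
  RInt (fun x => f x - g x) a b = RInt f a b - RInt g a b.
Proof.
  intros hf hg. rewrite <- (RInt_ext (fun x => f x + (-1) * g x)) by (intros; ring).
  rewrite RInt_lin by auto. ring.
Qed.

Lemma cont_minus f g : cont f -> cont g -> cont (fun x => f x - g x).
Proof. intros hf hg x. apply continuity_pt_minus; auto. Qed.
Lemma cont_scal k f : cont f -> cont (fun x => k * f x).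
Proof. intros hf. apply cont_mult; auto. apply cont_const. Qed.

Lemma dlin k c : derivable_pt_lim (fun t => t * k) c k.
Proof.
  intros e he. exists (mkposreal 1 Rlt_0_1). intros h hh _.
  replace (((c + h) * k - c * k) / h - k) with 0 by (field; auto).
  rewrite Rabs_R0; auto.
Qed.

Lemma param (G G1 : R -> R -> R) a b :
  (forall t, cont (G t)) ->
  (forall t s, derivable_pt_lim (fun t => G t s) t (G1 t s)) ->
  (forall s, jc2 G1 0 s) ->
  derivable_pt_lim (fun t => RInt (G t) a b) 0 (RInt (G1 0) a b).
Proof.
  intros hG hd hj e he.
  assert (hc1 : cont (G1 0)) by (intros s; apply jc2_cont; auto).
  set (e' := e / (Rabs (b - a) + 1)).
  assert (hpos : 0 < Rabs (b - a) + 1) by (generalize (Rabs_pos (b - a)); lra).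
  assert (he' : 0 < e') by (apply Rdiv_lt_0_compat; auto).
  assert (he'2 : e' * (Rabs (b - a) + 1) = e) by (unfold e'; field; lra).
  destruct (unif G1 (Rmin a b) (Rmax a b) (Rle_trans _ _ _ (Rmin_l a b) (Rmax_l a b)) hj e' he')
    as [d [hd0 Hd]].
  exists (mkposreal d hd0). intros h hh0 hhd. simpl in hhd.
  rewrite Rplus_0_l.
  assert (E : (RInt (G h) a b - RInt (G 0) a b) / h - RInt (G1 0) a b =
     RInt (fun s => / h * (G h s - G 0 s) - G1 0 s) a b).
  { rewrite RInt_minus, RInt_scal, RInt_minus; auto.
    - unfold Rdiv; ring.
    - apply cont_minus; auto.
    - apply cont_scal, cont_minus; auto. }
  rewrite E.
  eapply Rle_lt_trans.
  - apply (RInt_bound _ _ _ e').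
    + apply cont_minus; auto. apply cont_scal, cont_minus; auto.
    + intros s hs.
      destruct (MVT_abs (fun t => G t s - t * G1 0 s) (fun t => G1 t s - G1 0 s) 0 h) as [c [Hc Hc']].
      { intros c _. apply derivable_pt_lim_minus; auto.
        apply dlin. }
      assert (hcd : Rabs c < d).
      { unfold Rmin, Rmax in Hc'. revert hhd. unfold Rabs.
        destruct (Rle_dec 0 h); destruct Rcase_abs; destruct Rcase_abs; lra. }
      assert (B : Rabs (G1 c s - G1 0 s) < e') by (apply Hd; auto).
      replace (/ h * (G h s - G 0 s) - G1 0 s) with
         (/ h * ((G h s - h * G1 0 s) - (G 0 s - 0 * G1 0 s))) by (field; auto).
      rewrite Rabs_mult, Hc, Rminus_0_r, Rabs_inv.
      assert (hh : 0 < Rabs h) by (apply Rabs_pos_lt; auto).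
      replace (/ Rabs h * (Rabs (G1 c s - G1 0 s) * Rabs h)) with (Rabs (G1 c s - G1 0 s)) by (field; lra).
      lra.
  - rewrite <- he'2. apply Rmult_lt_compat_l; lra.
Qed.

Lemma mvt_eq F F' a b : (forall c, Rmin a b <= c <= Rmax a b -> derivable_pt_lim F c (F' c)) ->
  exists c, Rmin a b <= c <= Rmax a b /\ F b - F a = F' c * (b - a).
Proof.
  intros H. destruct (Rtotal_order a b) as [h|[h|h]].
  - destruct (MVT_cor2 F F' a b h) as [c [Hc Hc']].
    { intros c hc; apply H; rewrite Rmin_left, Rmax_right; lra. }
    exists c; split; auto; rewrite Rmin_left, Rmax_right; lra.
  - subst. exists b; split; [rewrite Rmin_left, Rmax_left; lra|ring].
  - destruct (MVT_cor2 F F' b a h) as [c [Hc Hc']].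
    { intros c hc; apply H; rewrite Rmin_right, Rmax_left; lra. }
    exists c; split; [rewrite Rmin_right, Rmax_left; lra|]. lra.
Qed.

Lemma dcont F x l : derivable_pt_lim F x l -> continuity_pt F x.
Proof. intros H. apply (derivable_continuous_pt F x (exist _ l H)). Qed.

Lemma chain2 (f f1 f2 : R -> R -> R) (P Q : R -> R) t0 P' Q' :
  (forall a b, derivable_pt_lim (fun s => f s b) a (f1 a b)) ->
  derivable_pt_lim (fun s => f (P t0) s) (Q t0) (f2 (P t0) (Q t0)) ->
  jc2 f1 (P t0) (Q t0) ->
  derivable_pt_lim P t0 P' -> derivable_pt_lim Q t0 Q' ->
  derivable_pt_lim (fun t => f (P t) (Q t)) t0 (f1 (P t0) (Q t0) * P' + f2 (P t0) (Q t0) * Q').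
Proof.
  intros hf1 hf2 hj hP hQ.
  set (P0 := P t0). set (Q0 := Q t0). set (A := f1 P0 Q0).
  assert (hphi : derivable_pt_lim (fun t => f (P t) (Q t) - f P0 (Q t)) t0 (A * P')).
  { intros e he.
    set (e1 := Rmin 1 (e / (2 * (Rabs A + 1)))).
    set (e2 := e / (2 * (Rabs P' + 2))).
    assert (hA : 0 < Rabs A + 1) by (generalize (Rabs_pos A); lra).
    assert (hP1 : 0 < Rabs P' + 2) by (generalize (Rabs_pos P'); lra).
    assert (he1 : 0 < e1) by (apply Rmin_pos; [lra|apply Rdiv_lt_0_compat; lra]).
    assert (he2 : 0 < e2) by (apply Rdiv_lt_0_compat; lra).
    destruct (hP e1 he1) as [d1 Hd1].
    destruct (hj e2 he2) as [d2 [hd2 Hd2]].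
    destruct (dcont P t0 P' hP d2 hd2) as [d3 [hd3 Hd3]].
    destruct (dcont Q t0 Q' hQ d2 hd2) as [d4 [hd4 Hd4]].
    assert (hd : 0 < Rmin d1 (Rmin d3 d4)) by (apply Rmin_pos; [apply cond_pos|apply Rmin_pos; auto]).
    exists (mkposreal _ hd). intros h hh0 hh. simpl in hh.
    assert (hh1 : Rabs h < d1) by (generalize (Rmin_l d1 (Rmin d3 d4)); lra).
    assert (hh3 : Rabs h < d3) by (generalize (Rmin_l d3 d4) (Rmin_r d1 (Rmin d3 d4)); lra).
    assert (hh4 : Rabs h < d4) by (generalize (Rmin_r d3 d4) (Rmin_r d1 (Rmin d3 d4)); lra).
    specialize (Hd1 h hh0 hh1).
    assert (HP3 : Rabs (P (t0 + h) - P0) < d2).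
    { destruct (Req_dec h 0); [congruence|].
      apply (Hd3 (t0 + h)). split; [split; [exact I|intro; apply H; lra]|].
      simpl; unfold Rdist. replace (t0 + h - t0) with h by ring. auto. }
    assert (HQ4 : Rabs (Q (t0 + h) - Q0) < d2).
    { apply (Hd4 (t0 + h)). split; [split; [exact I|intro; apply hh0; lra]|].
      simpl; unfold Rdist. replace (t0 + h - t0) with h by ring. auto. }
    destruct (mvt_eq (fun a => f a (Q (t0 + h))) (fun a => f1 a (Q (t0 + h))) P0 (P (t0 + h)))
      as [xi [hxi Exi]]. { intros; apply hf1. }
    assert (hxi' : Rabs (xi - P0) < d2).
    { revert HP3 hxi. unfold Rmin, Rmax, Rabs.
      destruct (Rle_dec P0 (P (t0 + h))); repeat destruct Rcase_abs; lra. }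
    specialize (Hd2 xi (Q (t0 + h)) hxi' HQ4). change (f1 (P t0) (Q t0)) with A in Hd2.
    set (beta := (P (t0 + h) - P t0) / h). fold beta in Hd1.
    replace ((f (P (t0 + h)) (Q (t0 + h)) - f P0 (Q (t0 + h)) - (f (P t0) (Q t0) - f P0 (Q t0))) / h - A * P')
      with (f1 xi (Q (t0 + h)) * beta - A * P').
    2:{ unfold beta. fold P0 Q0. rewrite Exi. unfold P0. field. auto. }
    replace (f1 xi (Q (t0 + h)) * beta - A * P') with
      ((f1 xi (Q (t0 + h)) - A) * beta + A * (beta - P')) by ring.
    assert (Hb : Rabs beta <= Rabs P' + 1).
    { replace beta with ((beta - P') + P') by ring.
      eapply Rle_trans; [apply Rabs_triang|]. generalize (Rmin_l 1 (e / (2 * (Rabs A + 1)))). fold e1. lra. }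
    eapply Rle_lt_trans; [apply Rabs_triang|]. rewrite !Rabs_mult.
    assert (X1 : Rabs (f1 xi (Q (t0 + h)) - A) * Rabs beta <= e2 * (Rabs P' + 1)).
    { apply Rmult_le_compat; try apply Rabs_pos; lra. }
    assert (X2 : Rabs A * Rabs (beta - P') <= Rabs A * e1).
    { apply Rmult_le_compat_l; [apply Rabs_pos|lra]. }
    assert (X3 : e2 * (Rabs P' + 1) < e / 2).
    { unfold e2. apply (Rmult_lt_reg_r (2 * (Rabs P' + 2))); [lra|].
      field_simplify; [|lra]. nra. }
    assert (X4 : Rabs A * e1 < e / 2).
    { assert (e1 <= e / (2 * (Rabs A + 1))) by apply Rmin_r.
      apply Rle_lt_trans with ((Rabs A) * (e / (2 * (Rabs A + 1)))).
      - apply Rmult_le_compat_l; [apply Rabs_pos|lra].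
      - apply (Rmult_lt_reg_r (2 * (Rabs A + 1))); [lra|]. field_simplify; [|lra]. nra. }
    lra. }
  assert (hpsi : derivable_pt_lim (fun t => f P0 (Q t)) t0 (f2 P0 Q0 * Q')).
  { apply (derivable_pt_lim_comp Q (fun s => f P0 s)); auto. }
  assert (E : (fun t => f (P t) (Q t)) = (fun t => (f (P t) (Q t) - f P0 (Q t)) + f P0 (Q t))).
  { apply functional_extensionality; intros; ring. }
  rewrite E. apply (derivable_pt_lim_plus (fun t => f (P t) (Q t) - f P0 (Q t)) (fun t => f P0 (Q t))); auto.
Qed.

Lemma cont_near g s0 e : continuity_pt g s0 -> 0 < e ->
  exists r, 0 < r /\ forall u, Rabs (u - s0) < r -> Rabs (g u - g s0) < e.
Proof.
  intros H he. destruct (H e he) as [r [hr Hr]]. exists r; split; auto.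
  intros u hu. destruct (Req_dec u s0) as [->|hne].
  - rewrite Rminus_diag, Rabs_R0; auto.
  - apply (Hr u). split; [split; [exact I|auto]|]. simpl; unfold Rdist; auto.
Qed.

Lemma bootstrap (g : R -> R) a b C C' : a <= b -> C' < C -> g a <= C ->
  (forall u, a <= u <= b -> continuity_pt g u) ->
  (forall t, a <= t <= b -> (forall u, a <= u <= t -> g u <= C) -> g t <= C') ->
  forall u, a <= u <= b -> g u <= C'.
Proof.
  intros hab hC hga hc key.
  set (L := fun c d => (forall u, a <= u <= c -> g u <= C) -> forall u, a <= u <= d -> g u <= C).
  assert (HL : L a b).
  { apply glue; auto.
    - intros c d e _ _ _ _ H1 H2 H. auto.
    - intros s0 hs0. destruct (cont_near g s0 ((C - C')/2) (hc s0 hs0) ltac:(lra)) as [r [hr Hr]].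
      exists r; split; auto. intros c d hac hcd hdb hc' hd' H u hu.
      destruct (Rle_dec u c); [apply H; lra|].
      assert (g c <= C') by (apply key; auto; lra).
      assert (A1 : Rabs (g u - g s0) < (C - C')/2) by (apply Hr; apply Rabs_def1; lra).
      assert (A2 : Rabs (g c - g s0) < (C - C')/2) by (apply Hr; apply Rabs_def1; lra).
      apply Rabs_def2 in A1. apply Rabs_def2 in A2. lra. }
  intros u hu. apply key; auto. intros w hw. apply HL; [|lra].
  intros w' hw'. replace w' with a by lra. auto.
Qed.

Lemma cmp_deriv g g' p p' a b : a <= b ->
  (forall u, a <= u <= b -> derivable_pt_lim g u (g' u)) ->
  (forall u, a <= u <= b -> derivable_pt_lim p u (p' u)) ->
  (forall u, a <= u <= b -> Rabs (g' u) <= p' u) ->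
  Rabs (g b - g a) <= p b - p a.
Proof.
  intros hab hg hp hb.
  assert (A1 : p a - g a <= p b - g b).
  { apply (incr_deriv (fun u => p u - g u) (fun u => p' u - g' u)); auto.
    - intros; apply derivable_pt_lim_minus; auto.
    - intros c hc. specialize (hb c hc). apply abs_le_inv in hb. lra. }
  assert (A2 : p a + g a <= p b + g b).
  { apply (incr_deriv (fun u => p u + g u) (fun u => p' u + g' u)); auto.
    - intros; apply derivable_pt_lim_plus; auto.
    - intros c hc. specialize (hb c hc). apply abs_le_inv in hb. lra. }
  apply Rabs_le; lra.
Qed.

Lemma shift_deriv F x0 l : derivable_pt_lim (fun t => F (x0 + t)) 0 l -> derivable_pt_lim F x0 l.
Proof.
  intros H e he. destruct (H e he) as [d Hd]. exists d. intros h h0 hh.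
  specialize (Hd h h0 hh). rewrite !Rplus_0_l, Rplus_0_r in Hd. auto.
Qed.

Lemma lim_bound F x0 l c r rho : derivable_pt_lim F x0 l -> 0 < r ->
  (forall h, h <> 0 -> Rabs h < r -> Rabs ((F (x0 + h) - F x0) / h - c) <= rho) ->
  Rabs (l - c) <= rho.
Proof.
  intros H hr hb. apply Rnot_lt_le. intro hlt.
  destruct (H (Rabs (l - c) - rho) ltac:(lra)) as [d Hd].
  assert (hd : 0 < d) by apply cond_pos.
  assert (hh : 0 < Rmin (d/2) (r/2)) by (apply Rmin_pos; lra).
  assert (h1 : Rabs (Rmin (d/2) (r/2)) < d) by (rewrite Rabs_pos_eq by lra; generalize (Rmin_l (d/2) (r/2)); lra).
  assert (h2 : Rabs (Rmin (d/2) (r/2)) < r) by (rewrite Rabs_pos_eq by lra; generalize (Rmin_r (d/2) (r/2)); lra).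
  remember (Rmin (d/2) (r/2)) as h.
  specialize (Hd h ltac:(lra) h1). specialize (hb h ltac:(lra) h2).
  set (q := (F (x0 + h) - F x0) / h) in *.
  assert (Rabs (l - c) <= Rabs (q - l) + Rabs (q - c)).
  { replace (l - c) with (-(q - l) + (q - c)) by ring.
    eapply Rle_trans; [apply Rabs_triang|]. rewrite Rabs_Ropp. lra. }
  lra.
Qed.

Lemma jc3_s1 (F : R -> R -> R -> R) a b c t0 :
  jc3 F (a + t0) b c -> jc2 (fun t s => F (a + t) b s) t0 c.
Proof.
  intros H e he. destruct (H e he) as [d [hd Hd]]. exists d; split; auto.
  intros t s ht hs. apply Hd; auto.
  - replace (a + t - (a + t0)) with (t - t0) by ring; auto.
  - rewrite Rminus_diag, Rabs_R0; auto.
Qed.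

Lemma jc3_s2 (F : R -> R -> R -> R) a b c t0 :
  jc3 F a (b + t0) c -> jc2 (fun t s => F a (b + t) s) t0 c.
Proof.
  intros H e he. destruct (H e he) as [d [hd Hd]]. exists d; split; auto.
  intros t s ht hs. apply Hd; auto.
  - rewrite Rminus_diag, Rabs_R0; auto.
  - replace (b + t - (b + t0)) with (t - t0) by ring; auto.
Qed.

Lemma jc3_cont3 (F : R -> R -> R -> R) a b c : jc3 F a b c -> continuity_pt (F a b) c.
Proof.
  intros H e he. destruct (H e he) as [d [hd Hd]]. exists d; split; auto.
  intros x [_ hx]. simpl in *. unfold Rdist in *. apply Hd; auto; rewrite Rminus_diag, Rabs_R0; auto.
Qed.

Lemma jc2_cont_both F a b : jc2 F a b -> forall (P Q : R -> R) t, P t = a -> Q t = b ->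
  continuity_pt P t -> continuity_pt Q t -> continuity_pt (fun t => F (P t) (Q t)) t.
Proof.
  intros H P Q t hP hQ cP cQ e he. destruct (H e he) as [d [hd Hd]].
  destruct (cont_near P t d cP hd) as [r1 [h1 H1]].
  destruct (cont_near Q t d cQ hd) as [r2 [h2 H2]].
  exists (Rmin r1 r2); split; [apply Rmin_pos; auto|].
  intros x [_ hx]. simpl in *. unfold Rdist in *. rewrite hP, hQ.
  apply Hd; [rewrite <- hP|rewrite <- hQ]; [apply H1|apply H2];
  generalize (Rmin_l r1 r2) (Rmin_r r1 r2); lra.
Qed.

Lemma const_on F a b : (forall c, Rmin a b <= c <= Rmax a b -> derivable_pt_lim F c 0) -> F a = F b.
Proof.
  intros H. destruct (mvt_eq F (fun _ => 0) a b H) as [c [_ Hc]]. lra.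
Qed.

Definition ODE (f1 f2 delta : R -> R -> R) (x1 x2 x1d x2d : R -> R -> R -> R -> R) eps X1 X2 :=
  (forall U, derivable_pt_lim (fun u => x1d eps X1 X2 u) U
            (1 / 2 * f1 (x1 eps X1 X2 U) (x2 eps X1 X2 U) * delta eps U)) /\
  (forall U, derivable_pt_lim (fun u => x2d eps X1 X2 u) U
            (1 / 2 * f2 (x1 eps X1 X2 U) (x2 eps X1 X2 U) * delta eps U)) /\
  x1 eps X1 X2 (-1) = X1 /\ x2 eps X1 X2 (-1) = X2 /\
  x1d eps X1 X2 (-1) = 0 /\ x2d eps X1 X2 (-1) = 0.

Definition Phi (delta : R -> R -> R) eps u := RInt (fun s => Rabs (delta eps s)) (- eps) u.


Lemma minors_bound (J : nat -> nat -> R) (r : R) :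
  0 <= r <= 1/2 ->
  J 0%nat 0%nat = 1 -> J 0%nat 1%nat = 0 -> J 0%nat 2%nat = 0 -> J 0%nat 3%nat = 0 ->
  J 1%nat 3%nat = 0 -> J 2%nat 3%nat = 0 -> J 3%nat 3%nat = 1 ->
  Rabs (J 1%nat 1%nat - 1) <= r -> Rabs (J 2%nat 2%nat - 1) <= r ->
  Rabs (J 1%nat 2%nat) <= r -> Rabs (J 2%nat 1%nat) <= r ->
  forall S, principal_index S -> 1 - 3 * r <= principal_minor J S <= 1 + 3 * r.
Proof.
  intros hr h00 h01 h02 h03 h13 h23 h33 ha hd hb hc S [hne [hnd hf]].
  apply abs_le_inv in ha. apply abs_le_inv in hd.
  apply abs_le_inv in hb. apply abs_le_inv in hc.
  assert (key : forall a b c d, 1 - r <= a <= 1 + r -> 1 - r <= d <= 1 + r ->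
    -r <= b <= r -> -r <= c <= r -> 1 - 3 * r <= a * d - b * c <= 1 + 3 * r).
  { intros a b c d Ha Hd Hb Hc. split; nra. }
  assert (k1 : forall a, 1 - r <= a <= 1 + r -> 1 - 3 * r <= a <= 1 + 3 * r) by (intros; lra).
  assert (k0 : 1 - 3 * r <= 1 <= 1 + 3 * r) by lra.
  unfold principal_minor.
  destruct S as [|i0 [|i1 [|i2 [|i3 [|i4 S]]]]]; [congruence| | | | |];
  repeat match goal with
  | H : Forall _ (_ :: _) |- _ => inversion H; subst; clear H
  | H : NoDup (_ :: _) |- _ => inversion H; subst; clear H
  end;
  repeat match goal with
  | H : (?i < 4)%nat |- _ => is_var i;
      destruct i as [|[|[|[|i]]]]; [| | | |exfalso; lia]; clear H
  end;
  repeat match goal with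
  | H : ~ In _ _ |- _ => exfalso; apply H; simpl; tauto
  end; try (exfalso; simpl in *; lia);
  simpl; rewrite ?h00, ?h01, ?h02, ?h03, ?h13, ?h23, ?h33;
  try (match goal with |- _ <= ?e <= _ =>
     let E := fresh in assert (E : e = J 1%nat 1%nat * J 2%nat 2%nat - J 1%nat 2%nat * J 2%nat 1%nat) by ring;
     rewrite E; apply key; lra end);
  try (match goal with |- _ <= ?e <= _ =>
     let E := fresh in assert (E : e = J 1%nat 1%nat) by ring; rewrite E; apply k1; lra end);
  try (match goal with |- _ <= ?e <= _ =>
     let E := fresh in assert (E : e = J 2%nat 2%nat) by ring; rewrite E; apply k1; lra end);
  try (match goal with |- _ <= ?e <= _ =>
     let E := fresh in assert (E : e = 1) by ring; rewrite E; exact k0 end).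
Qed.

Lemma cont1_pt (g : R -> R) s : cont_at 1 (fun p => g (p O)) (fun _ => s) -> continuity_pt g s.
Proof.
  intros H e he. destruct (H e he) as [d [hd Hd]]. exists d; split; auto.
  intros x [_ hx]. simpl in hx; unfold Rdist in hx.
  apply (Hd (fun i => match i with O => x | _ => s end)).
  - intros [|i] hi; [auto|lia].
  - intros [|i] hi; [lia|auto].
Qed.

Lemma dlin' k c : derivable_pt_lim (fun t => k * t) c k.
Proof.
  intros e he. exists (mkposreal 1 Rlt_0_1). intros h hh _.
  replace ((k * (c + h) - k * c) / h - k) with 0 by (field; auto).
  rewrite Rabs_R0; auto.
Qed.

Lemma lip (F Fa Fb : R -> R -> R) R0 L :
  (forall a b, derivable_pt_lim (fun s => F s b) a (Fa a b)) ->
  (forall a b, derivable_pt_lim (fun s => F a s) b (Fb a b)) ->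
  (forall a b, Rabs a <= R0 -> Rabs b <= R0 -> Rabs (Fa a b) <= L /\ Rabs (Fb a b) <= L) ->
  forall p q p' q', Rabs p <= R0 -> Rabs q <= R0 -> Rabs p' <= R0 -> Rabs q' <= R0 ->
    Rabs (F p' q' - F p q) <= L * (Rabs (p' - p) + Rabs (q' - q)).
Proof.
  intros ha hb hB p q p' q' hp hq hp' hq'.
  destruct (mvt_eq (fun s => F s q') (fun s => Fa s q') p p') as [c [hc Ec]]. { intros; apply ha. }
  destruct (mvt_eq (fun s => F p s) (fun s => Fb p s) q q') as [c' [hc' Ec']]. { intros; apply hb. }
  replace (F p' q' - F p q) with ((F p' q' - F p q') + (F p q' - F p q)) by ring.
  rewrite Ec, Ec'.
  assert (hcR : Rabs c <= R0).
  { apply abs_le_inv in hp. apply abs_le_inv in hp'. apply Rabs_le.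
    unfold Rmin, Rmax in hc; destruct Rle_dec; lra. }
  assert (hcR' : Rabs c' <= R0).
  { apply abs_le_inv in hq. apply abs_le_inv in hq'. apply Rabs_le.
    unfold Rmin, Rmax in hc'; destruct Rle_dec; lra. }
  destruct (hB c q' hcR hq') as [B1 _]. destruct (hB p c' hp hcR') as [_ B2].
  eapply Rle_trans; [apply Rabs_triang|]. rewrite !Rabs_mult.
  assert (Rabs (Fa c q') * Rabs (p' - p) <= L * Rabs (p' - p)) by (apply Rmult_le_compat_r; [apply Rabs_pos|auto]).
  assert (Rabs (Fb p c') * Rabs (q' - q) <= L * Rabs (q' - q)) by (apply Rmult_le_compat_r; [apply Rabs_pos|auto]).
  lra.
Qed.

Lemma uniq_fun2 (F G : R -> R -> R) : (forall a b, F a b = G a b) -> F = G.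
Proof. intros H. apply functional_extensionality; intro a; apply functional_extensionality; auto. Qed.
Lemma uniq_fun3 (F G : R -> R -> R -> R) : (forall a b c, F a b c = G a b c) -> F = G.
Proof. intros H. do 2 (apply functional_extensionality; intro). apply functional_extensionality; auto. Qed.

Section Main.
Variables (f f1 f2 : R -> R -> R) (delta : R -> R -> R)
  (x1 x2 x1d x2d : R -> R -> R -> R -> R).
Hypothesis Hf : smooth 2 (fun p => f (p O) (p 1%nat)).
Hypothesis Hf1 : forall a b, derivable_pt_lim (fun s => f s b) a (f1 a b).
Hypothesis Hf2 : forall a b, derivable_pt_lim (fun s => f a s) b (f2 a b).
Hypothesis Hdelta : strict_delta_net delta.
Hypothesis Hx1s : forall eps, 0 < eps <= 1 -> smooth 3 (fun p => x1 eps (p O) (p 1%nat) (p 2%nat)).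
Hypothesis Hx2s : forall eps, 0 < eps <= 1 -> smooth 3 (fun p => x2 eps (p O) (p 1%nat) (p 2%nat)).
Hypothesis Hx1d : forall eps X1 X2 U, 0 < eps <= 1 ->
  derivable_pt_lim (fun u => x1 eps X1 X2 u) U (x1d eps X1 X2 U).
Hypothesis Hx2d : forall eps X1 X2 U, 0 < eps <= 1 ->
  derivable_pt_lim (fun u => x2 eps X1 X2 u) U (x2d eps X1 X2 U).

Lemma f_reg : exists F11 F12 F21 F22 : R -> R -> R,
   (forall a b, jc2 f a b) /\ (forall a b, jc2 f1 a b) /\ (forall a b, jc2 f2 a b) /\
   (forall a b, jc2 F11 a b) /\ (forall a b, jc2 F12 a b) /\
   (forall a b, jc2 F21 a b) /\ (forall a b, jc2 F22 a b) /\
   (forall a b, derivable_pt_lim (fun s => f1 s b) a (F11 a b)) /\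
   (forall a b, derivable_pt_lim (fun s => f1 a s) b (F12 a b)) /\
   (forall a b, derivable_pt_lim (fun s => f2 s b) a (F21 a b)) /\
   (forall a b, derivable_pt_lim (fun s => f2 a s) b (F22 a b)).
Proof.
  destruct (C2_2 f (Hf 2%nat)) as [G1 [G2 [F11 [F12 [F21 [F22 H]]]]]].
  destruct H as [h0 [h1 [h2 [h3 [h4 [h5 [h6 [d1 [d2 [d3 [d4 [d5 d6]]]]]]]]]]]].
  assert (E1 : G1 = f1) by (apply uniq_fun2; intros; eapply uniqueness_limite; eauto).
  assert (E2 : G2 = f2) by (apply uniq_fun2; intros; eapply uniqueness_limite; eauto).
  subst. exists F11, F12, F21, F22. tauto.
Qed.

Lemma x_reg (x xd : R -> R -> R -> R -> R) eps : 0 < eps <= 1 ->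
  smooth 3 (fun p => x eps (p O) (p 1%nat) (p 2%nat)) ->
  (forall X1 X2 U, derivable_pt_lim (fun u => x eps X1 X2 u) U (xd eps X1 X2 U)) ->
  exists A1 A2 B1 B2 : R -> R -> R -> R,
   (forall a b c, jc3 (x eps) a b c) /\ (forall a b c, jc3 A1 a b c) /\ (forall a b c, jc3 A2 a b c) /\
   (forall a b c, jc3 (xd eps) a b c) /\ (forall a b c, jc3 B1 a b c) /\ (forall a b c, jc3 B2 a b c) /\
   (forall a b c, derivable_pt_lim (fun s => x eps s b c) a (A1 a b c)) /\
   (forall a b c, derivable_pt_lim (fun s => x eps a s c) b (A2 a b c)) /\
   (forall a b c, derivable_pt_lim (fun s => xd eps s b c) a (B1 a b c)) /\
   (forall a b c, derivable_pt_lim (fun s => xd eps a s c) b (B2 a b c)).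
Proof.
  intros heps hs hd.
  destruct (C2_3 (x eps) (hs 2%nat)) as [A1 [A2 [F3 [B1 [B2 H]]]]].
  destruct H as [h0 [h1 [h2 [h3 [h4 [h5 [d1 [d2 [d3 [d4 d5]]]]]]]]]].
  assert (E : F3 = xd eps) by (apply uniq_fun3; intros; eapply uniqueness_limite; eauto).
  subst. exists A1, A2, B1, B2. tauto.
Qed.

Lemma delta_cont eps : 0 < eps <= 1 -> cont (delta eps).
Proof.
  intros heps s. destruct Hdelta as [Hs _].
  apply cont1_pt. exact (Hs eps heps 0%nat (fun _ => s)).
Qed.

Lemma delta_out eps s : 0 < eps <= 1 -> (s <= - eps \/ eps <= s) -> delta eps s = 0.
Proof.
  intros heps hs. destruct Hdelta as [_ [Hsupp _]].
  destruct (Req_dec (delta eps s) 0) as [?|hne]; auto. exfalso.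
  destruct (cont_near (delta eps) s (Rabs (delta eps s)) (delta_cont eps heps s) (Rabs_pos_lt _ hne))
    as [r [hr Hr]].
  set (s' := if Rle_dec s (- eps) then s - r/2 else s + r/2).
  assert (hs' : Rabs (s' - s) < r) by (unfold s'; destruct Rle_dec; apply Rabs_def1; lra).
  specialize (Hr s' hs').
  assert (delta eps s' = 0).
  { destruct (Req_dec (delta eps s') 0) as [?|h']; auto.
    apply Hsupp in h'; auto. unfold s' in h'; destruct Rle_dec; lra. }
  rewrite H, Rminus_0_l, Rabs_Ropp in Hr. lra.
Qed.

Lemma cont_abs_delta eps : 0 < eps <= 1 -> cont (fun s => Rabs (delta eps s)).
Proof.
  intros heps s. apply (continuity_pt_comp (delta eps) Rabs). apply delta_cont; auto.
  apply Rcontinuity_abs.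
Qed.

Lemma Phi_deriv eps u : 0 < eps <= 1 -> derivable_pt_lim (Phi delta eps) u (Rabs (delta eps u)).
Proof. intros heps. unfold Phi. apply (RInt_deriv (fun s => Rabs (delta eps s))). apply cont_abs_delta; auto. Qed.

Lemma Phi_start eps : 0 < eps <= 1 -> Phi delta eps (- eps) = 0.
Proof. intros heps. unfold Phi. apply RInt_aa. apply cont_abs_delta; auto. Qed.

Lemma Phi_bound eps Cd u : 0 < eps <= 1 -> Phi delta eps eps <= Cd -> - eps <= u -> Phi delta eps u <= Cd.
Proof.
  intros heps hC hu. destruct (Rle_dec u eps).
  - assert (Phi delta eps u <= Phi delta eps eps); [|lra].
    apply (incr_deriv _ (fun s => Rabs (delta eps s))); [lra| |].
    + intros; apply Phi_deriv; auto.
    + intros; apply Rabs_pos.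
  - assert (Phi delta eps eps = Phi delta eps u); [|lra].
    apply const_on. intros c hc. rewrite Rmin_left, Rmax_right in hc by lra.
    replace 0 with (Rabs (delta eps c)). apply Phi_deriv; auto.
    rewrite delta_out by (auto; lra). apply Rabs_R0.
Qed.

Lemma ode_flat eps X1 X2 U : 0 < eps <= 1 -> ODE f1 f2 delta x1 x2 x1d x2d eps X1 X2 -> U <= - eps ->
  x1d eps X1 X2 U = 0 /\ x2d eps X1 X2 U = 0 /\ x1 eps X1 X2 U = X1 /\ x2 eps X1 X2 U = X2.
Proof.
  intros heps [o1 [o2 [i1 [i2 [i3 i4]]]]] hU.
  assert (hm : forall c, Rmin U (-1) <= c <= Rmax U (-1) -> c <= - eps).
  { intros c hc. unfold Rmin, Rmax in hc. destruct Rle_dec; lra. }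
  assert (d1 : x1d eps X1 X2 U = 0).
  { rewrite <- i3. apply (const_on (fun u => x1d eps X1 X2 u)). intros c hc.
    replace 0 with (1 / 2 * f1 (x1 eps X1 X2 c) (x2 eps X1 X2 c) * delta eps c).
    apply o1. rewrite (delta_out eps c heps (or_introl (hm c hc))). ring. }
  assert (d2 : x2d eps X1 X2 U = 0).
  { rewrite <- i4. apply (const_on (fun u => x2d eps X1 X2 u)). intros c hc.
    replace 0 with (1 / 2 * f2 (x1 eps X1 X2 c) (x2 eps X1 X2 c) * delta eps c).
    apply o2. rewrite (delta_out eps c heps (or_introl (hm c hc))). ring. }
  assert (z1 : forall c, c <= - eps -> x1d eps X1 X2 c = 0).
  { intros c hc. rewrite <- i3. apply (const_on (fun u => x1d eps X1 X2 u)). intros c' hc'.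
    replace 0 with (1 / 2 * f1 (x1 eps X1 X2 c') (x2 eps X1 X2 c') * delta eps c').
    apply o1. rewrite (delta_out eps c' heps); [ring|left]. unfold Rmin, Rmax in hc'. destruct Rle_dec; lra. }
  assert (z2 : forall c, c <= - eps -> x2d eps X1 X2 c = 0).
  { intros c hc. rewrite <- i4. apply (const_on (fun u => x2d eps X1 X2 u)). intros c' hc'.
    replace 0 with (1 / 2 * f2 (x1 eps X1 X2 c') (x2 eps X1 X2 c') * delta eps c').
    apply o2. rewrite (delta_out eps c' heps); [ring|left]. unfold Rmin, Rmax in hc'. destruct Rle_dec; lra. }
  repeat split; auto.
  - rewrite <- i1 at 2. apply (const_on (fun u => x1 eps X1 X2 u)). intros c hc.
    rewrite <- (z1 c (hm c hc)). apply Hx1d; auto.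
  - rewrite <- i2 at 2. apply (const_on (fun u => x2 eps X1 X2 u)). intros c hc.
    rewrite <- (z2 c (hm c hc)). apply Hx2d; auto.
Qed.

Lemma vel_bound eps X1 X2 G Cd t : 0 < eps <= 1 -> ODE f1 f2 delta x1 x2 x1d x2d eps X1 X2 ->
  0 <= G -> Phi delta eps eps <= Cd -> - eps <= t ->
  (forall u, - eps <= u <= t -> Rabs (f1 (x1 eps X1 X2 u) (x2 eps X1 X2 u)) <= G /\
                                Rabs (f2 (x1 eps X1 X2 u) (x2 eps X1 X2 u)) <= G) ->
  Rabs (x1d eps X1 X2 t) <= G * Cd / 2 /\ Rabs (x2d eps X1 X2 t) <= G * Cd / 2.
Proof.
  intros heps ho hG hC ht hb.
  destruct (ode_flat eps X1 X2 (-eps) heps ho ltac:(lra)) as [z1 [z2 _]].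
  destruct ho as [o1 [o2 _]].
  assert (hP : Phi delta eps t <= Cd) by (apply Phi_bound; auto).
  assert (hP0 := Phi_start eps heps).
  split.
  - assert (Rabs (x1d eps X1 X2 t - x1d eps X1 X2 (- eps)) <=
            G / 2 * Phi delta eps t - G / 2 * Phi delta eps (- eps)).
    { apply (cmp_deriv (fun u => x1d eps X1 X2 u) (fun u => 1 / 2 * f1 (x1 eps X1 X2 u) (x2 eps X1 X2 u) * delta eps u) (fun u => G / 2 * Phi delta eps u)
             (fun u => G / 2 * Rabs (delta eps u))); auto.
      - intros; apply derivable_pt_lim_scal; apply Phi_deriv; auto.
      - intros u hu. rewrite !Rabs_mult. destruct (hb u hu) as [h1 _].
        rewrite Rabs_pos_eq by lra.
        assert (Rabs (f1 (x1 eps X1 X2 u) (x2 eps X1 X2 u)) * Rabs (delta eps u) <= G * Rabs (delta eps u))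
          by (apply Rmult_le_compat_r; [apply Rabs_pos|auto]). lra. }
    rewrite z1, Rminus_0_r, hP0 in H.
    assert (G / 2 * Phi delta eps t <= G / 2 * Cd) by (apply Rmult_le_compat_l; lra). lra.
  - assert (Rabs (x2d eps X1 X2 t - x2d eps X1 X2 (- eps)) <=
            G / 2 * Phi delta eps t - G / 2 * Phi delta eps (- eps)).
    { apply (cmp_deriv (fun u => x2d eps X1 X2 u) (fun u => 1 / 2 * f2 (x1 eps X1 X2 u) (x2 eps X1 X2 u) * delta eps u) (fun u => G / 2 * Phi delta eps u)
             (fun u => G / 2 * Rabs (delta eps u))); auto.
      - intros; apply derivable_pt_lim_scal; apply Phi_deriv; auto.
      - intros u hu. rewrite !Rabs_mult. destruct (hb u hu) as [_ h1].
        rewrite Rabs_pos_eq by lra.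
        assert (Rabs (f2 (x1 eps X1 X2 u) (x2 eps X1 X2 u)) * Rabs (delta eps u) <= G * Rabs (delta eps u))
          by (apply Rmult_le_compat_r; [apply Rabs_pos|auto]). lra. }
    rewrite z2, Rminus_0_r, hP0 in H.
    assert (G / 2 * Phi delta eps t <= G / 2 * Cd) by (apply Rmult_le_compat_l; lra). lra.
Qed.

Lemma pos_cont (F : R -> R) c u : continuity_pt F u -> continuity_pt (fun u => Rabs (F u - c)) u.
Proof.
  intros h. apply (continuity_pt_comp (fun u => F u - c) Rabs).
  - apply continuity_pt_minus; auto. apply continuity_pt_const; intros ? ?; auto.
  - apply Rcontinuity_abs.
Qed.

Lemma traj_bound eps a b G Cd eta : 0 < eps <= 1 -> ODE f1 f2 delta x1 x2 x1d x2d eps a b ->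
  0 <= G -> 0 <= Cd -> Phi delta eps eps <= Cd -> - eps <= eta ->
  (eta + eps) * (G * Cd / 2) <= 1 / 4 ->
  (forall p q, Rabs (p - a) <= 1 -> Rabs (q - b) <= 1 -> Rabs (f1 p q) <= G /\ Rabs (f2 p q) <= G) ->
  forall U, - eps <= U <= eta ->
    Rabs (x1 eps a b U - a) <= 1/2 /\ Rabs (x2 eps a b U - b) <= 1/2 /\
    Rabs (x1d eps a b U) <= G * Cd / 2 /\ Rabs (x2d eps a b U) <= G * Cd / 2.
Proof.
  intros heps ho hG hC0 hC heta hsmall hGb.
  set (W := G * Cd / 2).
  assert (hW : 0 <= W) by (unfold W; apply Rmult_le_pos; [apply Rmult_le_pos|]; lra).
  destruct (ode_flat eps a b (-eps) heps ho ltac:(lra)) as [_ [_ [y0 z0]]].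
  set (g := fun u => Rabs (x1 eps a b u - a) + Rabs (x2 eps a b u - b)).
  assert (key : forall t, - eps <= t -> (forall u, - eps <= u <= t -> g u <= 1) ->
      Rabs (x1 eps a b t - a) <= W * (t + eps) /\ Rabs (x2 eps a b t - b) <= W * (t + eps) /\
      Rabs (x1d eps a b t) <= W /\ Rabs (x2d eps a b t) <= W).
  { intros t ht H.
    assert (hv : forall u, - eps <= u <= t -> Rabs (x1d eps a b u) <= W /\ Rabs (x2d eps a b u) <= W).
    { intros u hu. apply vel_bound; auto; try lra. intros w hw.
      specialize (H w ltac:(lra)). unfold g in H.
      apply hGb; generalize (Rabs_pos (x1 eps a b w - a)) (Rabs_pos (x2 eps a b w - b)); lra. }
    assert (P1 : Rabs (x1 eps a b t - x1 eps a b (-eps)) <= W * t - W * (- eps)).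
    { apply (cmp_deriv (fun u => x1 eps a b u) (fun u => x1d eps a b u) (fun u => W * u) (fun _ => W)).
      - lra.
      - intros; apply Hx1d; auto.
      - intros; apply dlin'.
      - intros u hu; apply hv; auto. }
    assert (P2 : Rabs (x2 eps a b t - x2 eps a b (-eps)) <= W * t - W * (- eps)).
    { apply (cmp_deriv (fun u => x2 eps a b u) (fun u => x2d eps a b u) (fun u => W * u) (fun _ => W)).
      - lra.
      - intros; apply Hx2d; auto.
      - intros; apply dlin'.
      - intros u hu; apply hv; auto. }
    rewrite y0 in P1. rewrite z0 in P2.
    repeat split; try lra; apply hv; lra. }
  assert (B : forall u, - eps <= u <= eta -> g u <= 1/2).
  { apply (bootstrap g (-eps) eta 1 (1/2)); try lra.
    - unfold g. rewrite y0, z0, !Rminus_diag, Rabs_R0. lra.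
    - intros u _. unfold g. apply continuity_pt_plus; apply pos_cont; eapply dcont; apply Hx1d || apply Hx2d; auto.
    - intros t ht H. destruct (key t ltac:(lra) H) as [k1 [k2 _]]. unfold g.
      assert (W * (t + eps) <= W * (eta + eps)) by (apply Rmult_le_compat_l; lra).
      assert (W * (eta + eps) <= 1/4) by (unfold W in *; lra). lra. }
  intros U hU.
  destruct (key U ltac:(lra)) as [k1 [k2 [k3 k4]]].
  { intros u hu. generalize (B u ltac:(lra)); lra. }
  assert (W * (U + eps) <= W * (eta + eps)) by (apply Rmult_le_compat_l; lra).
  assert (W * (eta + eps) <= 1/4) by (unfold W in *; lra).
  repeat split; auto; lra.
Qed.

Lemma diff_bound eps a b a' b' Cd L eta rho : 0 < eps <= 1 ->
  ODE f1 f2 delta x1 x2 x1d x2d eps a b -> ODE f1 f2 delta x1 x2 x1d x2d eps a' b' ->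
  0 <= L -> 0 <= Cd -> Phi delta eps eps <= Cd -> - eps <= eta -> 0 < rho <= 1 ->
  4 * ((eta + eps) * (L * Cd)) <= rho ->
  0 < Rabs (a' - a) + Rabs (b' - b) ->
  (forall p q p' q', Rabs (p - a) <= 1 -> Rabs (q - b) <= 1 -> Rabs (p' - a) <= 1 -> Rabs (q' - b) <= 1 ->
     Rabs (f1 p' q' - f1 p q) <= L * (Rabs (p' - p) + Rabs (q' - q)) /\
     Rabs (f2 p' q' - f2 p q) <= L * (Rabs (p' - p) + Rabs (q' - q))) ->
  (forall U, - eps <= U <= eta -> Rabs (x1 eps a b U - a) <= 1 /\ Rabs (x2 eps a b U - b) <= 1 /\
      Rabs (x1 eps a' b' U - a) <= 1 /\ Rabs (x2 eps a' b' U - b) <= 1) ->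
  forall U, - eps <= U <= eta ->
    Rabs ((x1 eps a' b' U - x1 eps a b U) - (a' - a)) + Rabs ((x2 eps a' b' U - x2 eps a b U) - (b' - b))
      <= rho * (Rabs (a' - a) + Rabs (b' - b)) / 2.
Proof.
  intros heps ho ho' hL hC0 hC heta hrho hsmall hm HL HT.
  set (m := Rabs (a' - a) + Rabs (b' - b)) in *.
  destruct (ode_flat eps a b (-eps) heps ho ltac:(lra)) as [v1 [v2 [y0 z0]]].
  destruct (ode_flat eps a' b' (-eps) heps ho' ltac:(lra)) as [v1' [v2' [y0' z0']]].
  destruct ho as [o1 [o2 _]]. destruct ho' as [o1' [o2' _]].
  set (D1 := fun u => x1 eps a' b' u - x1 eps a b u).
  set (D2 := fun u => x2 eps a' b' u - x2 eps a b u).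
  set (g := fun u => Rabs (D1 u - (a' - a)) + Rabs (D2 u - (b' - b))).
  assert (hP0 := Phi_start eps heps).
  assert (hrm : 0 < rho * m) by (apply Rmult_lt_0_compat; lra).
  apply (bootstrap g (-eps) eta (rho * m) (rho * m / 2)); try lra.
  - unfold g, D1, D2; cbv beta. rewrite y0, z0, y0', z0'.
    replace (a' - a - (a' - a)) with 0 by ring. replace (b' - b - (b' - b)) with 0 by ring.
    rewrite Rabs_R0. lra.
  - intros u _. unfold g, D1, D2. apply continuity_pt_plus; apply pos_cont; apply continuity_pt_minus;
      eapply dcont; (apply Hx1d || apply Hx2d); auto.
  - intros t ht H.
    assert (hD : forall u, - eps <= u <= t -> Rabs (D1 u) + Rabs (D2 u) <= 2 * m).
    { intros u hu. specialize (H u hu). unfold g in H.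
      assert (Rabs (D1 u) <= Rabs (D1 u - (a' - a)) + Rabs (a' - a)).
      { replace (D1 u) with ((D1 u - (a' - a)) + (a' - a)) at 1 by ring. apply Rabs_triang. }
      assert (Rabs (D2 u) <= Rabs (D2 u - (b' - b)) + Rabs (b' - b)).
      { replace (D2 u) with ((D2 u - (b' - b)) + (b' - b)) at 1 by ring. apply Rabs_triang. }
      unfold m in *. nra. }
    assert (hE : forall u, - eps <= u <= t ->
       Rabs (x1d eps a' b' u - x1d eps a b u) <= L * m * Cd /\
       Rabs (x2d eps a' b' u - x2d eps a b u) <= L * m * Cd).
    { intros u hu.
      assert (hPu : Phi delta eps u <= Cd) by (apply Phi_bound; auto; lra).
      assert (hLm : 0 <= L * m) by (apply Rmult_le_pos; lra).
      assert (LmP : L * m * Phi delta eps u <= L * m * Cd) by (apply Rmult_le_compat_l; lra).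
      split.
      - assert (Rabs ((x1d eps a' b' u - x1d eps a b u) - (x1d eps a' b' (-eps) - x1d eps a b (-eps)))
           <= L * m * Phi delta eps u - L * m * Phi delta eps (- eps)).
        { apply (cmp_deriv (fun u => x1d eps a' b' u - x1d eps a b u)
             (fun u => 1 / 2 * f1 (x1 eps a' b' u) (x2 eps a' b' u) * delta eps u
                     - 1 / 2 * f1 (x1 eps a b u) (x2 eps a b u) * delta eps u)
             (fun u => L * m * Phi delta eps u) (fun u => L * m * Rabs (delta eps u))).
          - lra.
          - intros; apply derivable_pt_lim_minus; auto.
          - intros; apply derivable_pt_lim_scal; apply Phi_deriv; auto.
          - intros w hw. destruct (HT w ltac:(lra)) as [t1 [t2 [t3 t4]]].
            destruct (HL _ _ _ _ t1 t2 t3 t4) as [l1 _].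
            specialize (hD w ltac:(lra)). unfold D1, D2 in hD.
            replace (1 / 2 * f1 (x1 eps a' b' w) (x2 eps a' b' w) * delta eps w -
                     1 / 2 * f1 (x1 eps a b w) (x2 eps a b w) * delta eps w)
              with (1 / 2 * (f1 (x1 eps a' b' w) (x2 eps a' b' w) - f1 (x1 eps a b w) (x2 eps a b w)) * delta eps w) by ring.
            rewrite !Rabs_mult. rewrite (Rabs_pos_eq (1/2)) by lra.
            apply Rmult_le_compat_r; [apply Rabs_pos|]. nra. }
        rewrite v1, v1', hP0 in H0. rewrite Rminus_0_r, Rmult_0_r, Rminus_0_r, Rminus_0_r in H0. lra.
      - assert (Rabs ((x2d eps a' b' u - x2d eps a b u) - (x2d eps a' b' (-eps) - x2d eps a b (-eps)))
           <= L * m * Phi delta eps u - L * m * Phi delta eps (- eps)).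
        { apply (cmp_deriv (fun u => x2d eps a' b' u - x2d eps a b u)
             (fun u => 1 / 2 * f2 (x1 eps a' b' u) (x2 eps a' b' u) * delta eps u
                     - 1 / 2 * f2 (x1 eps a b u) (x2 eps a b u) * delta eps u)
             (fun u => L * m * Phi delta eps u) (fun u => L * m * Rabs (delta eps u))).
          - lra.
          - intros; apply derivable_pt_lim_minus; auto.
          - intros; apply derivable_pt_lim_scal; apply Phi_deriv; auto.
          - intros w hw. destruct (HT w ltac:(lra)) as [t1 [t2 [t3 t4]]].
            destruct (HL _ _ _ _ t1 t2 t3 t4) as [_ l2].
            specialize (hD w ltac:(lra)). unfold D1, D2 in hD.
            replace (1 / 2 * f2 (x1 eps a' b' w) (x2 eps a' b' w) * delta eps w -
                     1 / 2 * f2 (x1 eps a b w) (x2 eps a b w) * delta eps w)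
              with (1 / 2 * (f2 (x1 eps a' b' w) (x2 eps a' b' w) - f2 (x1 eps a b w) (x2 eps a b w)) * delta eps w) by ring.
            rewrite !Rabs_mult. rewrite (Rabs_pos_eq (1/2)) by lra.
            apply Rmult_le_compat_r; [apply Rabs_pos|]. nra. }
        rewrite v2, v2', hP0 in H0. rewrite Rminus_0_r, Rmult_0_r, Rminus_0_r, Rminus_0_r in H0. lra. }
    set (K := L * m * Cd).
    assert (P1 : Rabs (D1 t - D1 (-eps)) <= K * t - K * (- eps)).
    { apply (cmp_deriv D1 (fun u => x1d eps a' b' u - x1d eps a b u) (fun u => K * u) (fun _ => K)).
      - lra.
      - intros; unfold D1; apply derivable_pt_lim_minus; apply Hx1d; auto.
      - intros; apply dlin'.
      - intros u hu; apply hE; auto. }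
    assert (P2 : Rabs (D2 t - D2 (-eps)) <= K * t - K * (- eps)).
    { apply (cmp_deriv D2 (fun u => x2d eps a' b' u - x2d eps a b u) (fun u => K * u) (fun _ => K)).
      - lra.
      - intros; unfold D2; apply derivable_pt_lim_minus; apply Hx2d; auto.
      - intros; apply dlin'.
      - intros u hu; apply hE; auto. }
    unfold D1, D2 in P1, P2. rewrite y0, y0' in P1. rewrite z0, z0' in P2. unfold g, D1, D2.
    assert (K * (t + eps) <= K * (eta + eps)).
    { apply Rmult_le_compat_l; [unfold K; apply Rmult_le_pos; [apply Rmult_le_pos|]; lra|lra]. }
    assert (2 * (K * (eta + eps)) <= rho * m / 2).
    { unfold K. replace (2 * (L * m * Cd * (eta + eps))) with (m * (2 * ((eta + eps) * (L * Cd)))) by ring.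
      replace (rho * m / 2) with (m * (rho / 2)) by field. apply Rmult_le_compat_l; lra. }
    lra.
Qed.

Lemma dmulc F x l c : derivable_pt_lim F x l -> derivable_pt_lim (fun t => F t * c) x (l * c).
Proof.
  intros H. replace (l * c) with (l * c + F x * 0) by ring.
  apply (derivable_pt_lim_mult F (fun _ => c)); auto. apply derivable_pt_lim_const.
Qed.

Lemma PV eps V U (y z yd zd Y Z YD ZD : R -> R -> R) :
  0 < eps <= 1 ->
  (forall t s, derivable_pt_lim (fun t => y t s) t (Y t s)) ->
  (forall t s, derivable_pt_lim (fun t => z t s) t (Z t s)) ->
  (forall t s, derivable_pt_lim (fun t => yd t s) t (YD t s)) ->
  (forall t s, derivable_pt_lim (fun t => zd t s) t (ZD t s)) ->
  (forall t s, jc2 y t s /\ jc2 z t s /\ jc2 yd t s /\ jc2 zd t s /\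
               jc2 Y t s /\ jc2 Z t s /\ jc2 YD t s /\ jc2 ZD t s) ->
  (forall t, Rabs t < 1 -> (forall s, derivable_pt_lim (yd t) s (1 / 2 * f1 (y t s) (z t s) * delta eps s)) /\
      (forall s, derivable_pt_lim (zd t) s (1 / 2 * f2 (y t s) (z t s) * delta eps s)) /\
      yd t (- eps) = 0 /\ zd t (- eps) = 0) ->
  exists l, derivable_pt_lim (fun t => V + RInt (fun s => f (y t s) (z t s) * delta eps s) (- eps) U
     + RInt (fun s => RInt (fun r => (f1 (y t r) (z t r) * yd t r + f2 (y t r) (z t r) * zd t r)
              * delta eps r) (- eps) s) (- eps) U) 0 l.
Proof.
  intros heps dy dz dyd dzd hj hode.
  destruct f_reg as [F11 [F12 [F21 [F22 [jf [jf1 [jf2 _]]]]]]].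
  assert (hdc := delta_cont eps heps).
  assert (cy : forall t s, continuity_pt (y t) s) by (intros; apply jc2_cont; apply hj).
  assert (cz : forall t s, continuity_pt (z t) s) by (intros; apply jc2_cont; apply hj).
  assert (cyd : forall t s, continuity_pt (yd t) s) by (intros; apply jc2_cont; apply hj).
  assert (czd : forall t s, continuity_pt (zd t) s) by (intros; apply jc2_cont; apply hj).
  assert (cF : forall (F : R -> R -> R), (forall a b, jc2 F a b) -> forall t,
     cont (fun s => F (y t s) (z t s))).
  { intros F hF t s. apply (jc2_cont_both F (y t s) (z t s) (hF _ _)); auto. }
  assert (hk : forall t, Rabs t < 1 -> forall s,
     RInt (fun r => (f1 (y t r) (z t r) * yd t r + f2 (y t r) (z t r) * zd t r) * delta eps r) (- eps) s
     = yd t s * yd t s + zd t s * zd t s).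
  { intros t ht s. destruct (hode t ht) as [o1 [o2 [i1 i2]]].
    rewrite (RInt_FTC (fun s => yd t s * yd t s + zd t s * zd t s)).
    - rewrite i1, i2. ring.
    - apply cont_mult; [apply cont_plus; apply cont_mult; [apply cF; auto|intro; auto|apply cF; auto|intro; auto]|auto].
    - intros x.
      replace ((f1 (y t x) (z t x) * yd t x + f2 (y t x) (z t x) * zd t x) * delta eps x) with
        ((1 / 2 * f1 (y t x) (z t x) * delta eps x) * yd t x + yd t x * (1 / 2 * f1 (y t x) (z t x) * delta eps x)
         + ((1 / 2 * f2 (y t x) (z t x) * delta eps x) * zd t x + zd t x * (1 / 2 * f2 (y t x) (z t x) * delta eps x)))
        by field.
      apply (derivable_pt_lim_plus (fun s => yd t s * yd t s) (fun s => zd t s * zd t s)).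
      + apply (derivable_pt_lim_mult (yd t) (yd t)); auto.
      + apply (derivable_pt_lim_mult (zd t) (zd t)); auto. }
  set (G := fun t s => f (y t s) (z t s) * delta eps s).
  set (G1 := fun t s => (f1 (y t s) (z t s) * Y t s + f2 (y t s) (z t s) * Z t s) * delta eps s).
  set (H := fun t s => yd t s * yd t s + zd t s * zd t s).
  set (H1 := fun t s => YD t s * yd t s + yd t s * YD t s + (ZD t s * zd t s + zd t s * ZD t s)).
  exists (0 + RInt (G1 0) (- eps) U + RInt (H1 0) (- eps) U).
  apply (derivable_pt_lim_locally_ext (fun t => V + RInt (G t) (- eps) U + RInt (H t) (- eps) U) _ 0 (-1) 1).
  - lra.
  - intros t ht. unfold G. f_equal. apply RInt_ext. intros s. unfold H. rewrite hk; auto.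
    apply Rabs_def1; lra.
  - apply derivable_pt_lim_plus; [apply derivable_pt_lim_plus|].
    + apply derivable_pt_lim_const.
    + apply param.
      * intros t. unfold G. apply cont_mult; [apply cF; auto|auto].
      * intros t s. unfold G, G1. apply dmulc.
        apply (chain2 f f1 f2 (fun t => y t s) (fun t => z t s)); auto.
      * intros s. unfold G1. apply jc2_mult; [|apply jc2_of1; auto].
        destruct (hj 0 s) as [j1 [j2 [_ [_ [j5 [j6 _]]]]]].
        apply jc2_plus; apply jc2_mult; auto; apply jc2_comp; auto.
    + apply param.
      * intros t. unfold H. apply cont_plus; apply cont_mult; intro; auto.
      * intros t s. unfold H, H1. apply derivable_pt_lim_plus;
          [apply (derivable_pt_lim_mult (fun t => yd t s) (fun t => yd t s))
          |apply (derivable_pt_lim_mult (fun t => zd t s) (fun t => zd t s))]; auto.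
      * intros s. unfold H1. destruct (hj 0 s) as [_ [_ [j3 [j4 [_ [_ [j7 j8]]]]]]].
        repeat apply jc2_plus; apply jc2_mult; auto.
Qed.

Lemma Dx_bound eps a b a' b' Cd G L eta rho M : 0 < eps <= 1 ->
  ODE f1 f2 delta x1 x2 x1d x2d eps a b -> ODE f1 f2 delta x1 x2 x1d x2d eps a' b' ->
  Rabs a <= M + 1/2 -> Rabs b <= M + 1/2 -> Rabs (a' - a) <= 1/2 -> Rabs (b' - b) <= 1/2 ->
  0 < Rabs (a' - a) + Rabs (b' - b) ->
  0 <= G -> 0 <= L -> 0 <= Cd -> Phi delta eps eps <= Cd -> 0 <= eta -> 0 < rho <= 1 ->
  (eta + eps) * (G * Cd / 2) <= 1 / 4 -> 4 * ((eta + eps) * (L * Cd)) <= rho ->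
  (forall p q, Rabs p <= M + 2 -> Rabs q <= M + 2 -> Rabs (f1 p q) <= G /\ Rabs (f2 p q) <= G) ->
  (forall p q p' q', Rabs p <= M + 2 -> Rabs q <= M + 2 -> Rabs p' <= M + 2 -> Rabs q' <= M + 2 ->
     Rabs (f1 p' q' - f1 p q) <= L * (Rabs (p' - p) + Rabs (q' - q)) /\
     Rabs (f2 p' q' - f2 p q) <= L * (Rabs (p' - p) + Rabs (q' - q))) ->
  forall U, U <= eta ->
    Rabs ((x1 eps a' b' U - x1 eps a b U) - (a' - a)) + Rabs ((x2 eps a' b' U - x2 eps a b U) - (b' - b))
      <= rho * (Rabs (a' - a) + Rabs (b' - b)) / 2.
Proof.
  intros heps ho ho' ha hb ha' hb' hm hG hL hC0 hC heta hrho hs1 hs2 HG HL U hU.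
  assert (hrm : 0 < rho * (Rabs (a' - a) + Rabs (b' - b))) by (apply Rmult_lt_0_compat; lra).
  destruct (Rle_dec U (- eps)) as [hle|hgt].
  - destruct (ode_flat eps a b U heps ho hle) as [_ [_ [e1 e2]]].
    destruct (ode_flat eps a' b' U heps ho' hle) as [_ [_ [e1' e2']]].
    rewrite e1, e2, e1', e2'. replace (a' - a - (a' - a)) with 0 by ring.
    replace (b' - b - (b' - b)) with 0 by ring. rewrite Rabs_R0. lra.
  - assert (habs : forall u v w, Rabs (u - v) <= w -> Rabs u <= Rabs v + w).
    { intros u v w H. replace u with ((u - v) + v) by ring.
      eapply Rle_trans; [apply Rabs_triang|lra]. }
    assert (T1 := traj_bound eps a b G Cd eta heps ho hG hC0 hC ltac:(lra) hs1).
    assert (T2 := traj_bound eps a' b' G Cd eta heps ho' hG hC0 hC ltac:(lra) hs1).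
    assert (T1' : forall U, - eps <= U <= eta -> Rabs (x1 eps a b U - a) <= 1/2 /\ Rabs (x2 eps a b U - b) <= 1/2).
    { intros U0 hU0.
      assert (HGa : forall p q, Rabs (p - a) <= 1 -> Rabs (q - b) <= 1 -> Rabs (f1 p q) <= G /\ Rabs (f2 p q) <= G).
      { intros p q hp hq. apply HG; apply habs in hp; apply habs in hq; lra. }
      destruct (T1 HGa U0 hU0) as [p1 [p2 _]]; auto. }
    assert (T2' : forall U, - eps <= U <= eta -> Rabs (x1 eps a' b' U - a') <= 1/2 /\ Rabs (x2 eps a' b' U - b') <= 1/2).
    { intros U0 hU0.
      assert (HGa : forall p q, Rabs (p - a') <= 1 -> Rabs (q - b') <= 1 -> Rabs (f1 p q) <= G /\ Rabs (f2 p q) <= G).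
      { intros p q hp hq. apply habs in ha'. apply habs in hb'.
        apply HG; apply habs in hp; apply habs in hq; lra. }
      destruct (T2 HGa U0 hU0) as [p1 [p2 _]]; auto. }
    apply (diff_bound eps a b a' b' Cd L eta rho); auto; try lra.
    + intros p q p' q' hp hq hp' hq'. apply habs in hp. apply habs in hq. apply habs in hp'. apply habs in hq'.
      apply HL; lra.
    + intros u hu. destruct (T1' u hu) as [t1 t2]. destruct (T2' u hu) as [t3 t4].
      assert (Rabs (x1 eps a' b' u - a) <= 1).
      { replace (x1 eps a' b' u - a) with ((x1 eps a' b' u - a') + (a' - a)) by ring.
        eapply Rle_trans; [apply Rabs_triang|lra]. }
      assert (Rabs (x2 eps a' b' u - b) <= 1).
      { replace (x2 eps a' b' u - b) with ((x2 eps a' b' u - b') + (b' - b)) by ring.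
        eapply Rle_trans; [apply Rabs_triang|lra]. }
      repeat split; lra.
Qed.

Lemma shift2 (F : R -> R) X t l : derivable_pt_lim F (X + t) l -> derivable_pt_lim (fun t => F (X + t)) t l.
Proof.
  intros H. replace l with (l * 1) by ring.
  apply (derivable_pt_lim_comp (fun t => X + t) F); auto.
  replace 1 with (0 + 1) by ring. apply derivable_pt_lim_plus.
  apply derivable_pt_lim_const. apply derivable_pt_lim_id.
Qed.

Lemma row3 eps M X1 X2 V U : 0 < eps <= 1 -> Rabs X1 <= M -> Rabs X2 <= M ->
  (forall a b, Rabs a <= M + 1 -> Rabs b <= M + 1 -> ODE f1 f2 delta x1 x2 x1d x2d eps a b) ->
  exists l0 l1 l2,
    derivable_pt_lim (fun u => v_eps f f1 f2 delta x1 x2 x1d x2d eps X1 X2 V u) U l0 /\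
    derivable_pt_lim (fun s => v_eps f f1 f2 delta x1 x2 x1d x2d eps s X2 V U) X1 l1 /\
    derivable_pt_lim (fun s => v_eps f f1 f2 delta x1 x2 x1d x2d eps X1 s V U) X2 l2 /\
    derivable_pt_lim (fun s => v_eps f f1 f2 delta x1 x2 x1d x2d eps X1 X2 s U) V 1.
Proof.
  intros heps hX1 hX2 HQ.
  destruct f_reg as [F11 [F12 [F21 [F22 [jf [jf1 [jf2 _]]]]]]].
  destruct (x_reg x1 x1d eps heps (Hx1s eps heps) (fun a b c => Hx1d eps a b c heps)) as
    [A1 [A2 [B1 [B2 [j0 [j1 [j2 [j3 [j4 [j5 [d1 [d2 [d3 d4]]]]]]]]]]]]].
  destruct (x_reg x2 x2d eps heps (Hx2s eps heps) (fun a b c => Hx2d eps a b c heps)) as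
    [A1' [A2' [B1' [B2' [j0' [j1' [j2' [j3' [j4' [j5' [d1' [d2' [d3' d4']]]]]]]]]]]]].
  assert (hdc := delta_cont eps heps).
  assert (cx : forall (F : R -> R -> R -> R) a b, (forall a b c, jc3 F a b c) -> cont (F a b)).
  { intros F a b H c. apply jc3_cont3; auto. }
  assert (cF : forall (F : R -> R -> R), (forall a b, jc2 F a b) ->
     cont (fun s => F (x1 eps X1 X2 s) (x2 eps X1 X2 s))).
  { intros F hF s. apply (jc2_cont_both F (x1 eps X1 X2 s) (x2 eps X1 X2 s) (hF _ _)); auto; apply jc3_cont3; auto. }
  set (k := fun r => (f1 (x1 eps X1 X2 r) (x2 eps X1 X2 r) * x1d eps X1 X2 r
                    + f2 (x1 eps X1 X2 r) (x2 eps X1 X2 r) * x2d eps X1 X2 r) * delta eps r).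
  assert (ck : cont k).
  { unfold k. apply cont_mult; auto. apply cont_plus; apply cont_mult; auto. }
  assert (hX1' : forall t, Rabs t < 1 -> Rabs (X1 + t) <= M + 1).
  { intros t ht. apply abs_le_inv in hX1. apply Rabs_def2 in ht. apply Rabs_le; lra. }
  assert (hX2' : forall t, Rabs t < 1 -> Rabs (X2 + t) <= M + 1).
  { intros t ht. apply abs_le_inv in hX2. apply Rabs_def2 in ht. apply Rabs_le; lra. }
  assert (hX1'' : Rabs X1 <= M + 1) by lra. assert (hX2'' : Rabs X2 <= M + 1) by lra.
  exists (0 + f (x1 eps X1 X2 U) (x2 eps X1 X2 U) * delta eps U + RInt k (- eps) U).
  destruct (PV eps V U (fun t s => x1 eps (X1 + t) X2 s) (fun t s => x2 eps (X1 + t) X2 s)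
     (fun t s => x1d eps (X1 + t) X2 s) (fun t s => x2d eps (X1 + t) X2 s)
     (fun t s => A1 (X1 + t) X2 s) (fun t s => A1' (X1 + t) X2 s)
     (fun t s => B1 (X1 + t) X2 s) (fun t s => B1' (X1 + t) X2 s)) as [l1 Hl1]; auto.
  { intros; apply (shift2 (fun a => x1 eps a X2 s)); auto. }
  { intros; apply (shift2 (fun a => x2 eps a X2 s)); auto. }
  { intros; apply (shift2 (fun a => x1d eps a X2 s)); auto. }
  { intros; apply (shift2 (fun a => x2d eps a X2 s)); auto. }
  { intros t s. repeat split; apply jc3_s1; auto. }
  { intros t ht. destruct (HQ (X1 + t) X2 (hX1' t ht) hX2'') as [o1 [o2 _]].
    destruct (ode_flat eps (X1 + t) X2 (- eps) heps (HQ _ _ (hX1' t ht) hX2'') ltac:(lra)) as [z1 [z2 _]].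
    repeat split; auto. }
  destruct (PV eps V U (fun t s => x1 eps X1 (X2 + t) s) (fun t s => x2 eps X1 (X2 + t) s)
     (fun t s => x1d eps X1 (X2 + t) s) (fun t s => x2d eps X1 (X2 + t) s)
     (fun t s => A2 X1 (X2 + t) s) (fun t s => A2' X1 (X2 + t) s)
     (fun t s => B2 X1 (X2 + t) s) (fun t s => B2' X1 (X2 + t) s)) as [l2 Hl2]; auto.
  { intros; apply (shift2 (fun a => x1 eps X1 a s)); auto. }
  { intros; apply (shift2 (fun a => x2 eps X1 a s)); auto. }
  { intros; apply (shift2 (fun a => x1d eps X1 a s)); auto. }
  { intros; apply (shift2 (fun a => x2d eps X1 a s)); auto. }
  { intros t s. repeat split; apply jc3_s2; auto. }
  { intros t ht. destruct (HQ X1 (X2 + t) hX1'' (hX2' t ht)) as [o1 [o2 _]].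
    destruct (ode_flat eps X1 (X2 + t) (- eps) heps (HQ _ _ hX1'' (hX2' t ht)) ltac:(lra)) as [z1 [z2 _]].
    repeat split; auto. }
  exists l1, l2. unfold v_eps. repeat split.
  - apply derivable_pt_lim_plus; [apply derivable_pt_lim_plus|].
    + apply derivable_pt_lim_const.
    + apply (RInt_deriv (fun s => f (x1 eps X1 X2 s) (x2 eps X1 X2 s) * delta eps s)).
      apply cont_mult; auto.
    + apply (RInt_deriv (fun s => RInt k (- eps) s)).
      intros s. eapply dcont. apply RInt_deriv; auto.
  - apply shift_deriv. exact Hl1.
  - apply shift_deriv. exact Hl2.
  - replace 1 with (1 + 0 + 0) by ring.
    apply (derivable_pt_lim_plus (fun s => s + RInt (fun s => f (x1 eps X1 X2 s) (x2 eps X1 X2 s) * delta eps s) (- eps) U)).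
    apply (derivable_pt_lim_plus (fun s => s)).
    apply derivable_pt_lim_id. apply derivable_pt_lim_const. apply derivable_pt_lim_const.
Qed.

Hypothesis Hode : forall K : R -> R -> Prop, compact2 K ->
     exists epsK, 0 < epsK /\
       forall X1 X2 eps, K X1 X2 -> 0 < eps <= 1 -> eps <= epsK ->
         (forall U, derivable_pt_lim (fun u => x1d eps X1 X2 u) U
            (1 / 2 * f1 (x1 eps X1 X2 U) (x2 eps X1 X2 U) * delta eps U)) /\
         (forall U, derivable_pt_lim (fun u => x2d eps X1 X2 u) U
            (1 / 2 * f2 (x1 eps X1 X2 U) (x2 eps X1 X2 U) * delta eps U)) /\
         x1 eps X1 X2 (-1) = X1 /\ x2 eps X1 X2 (-1) = X2 /\
         x1d eps X1 X2 (-1) = 0 /\ x2d eps X1 X2 (-1) = 0.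

Lemma core K : compact2 K -> forall rho, 0 < rho <= 1/2 ->
  exists eta eps0, 0 < eta /\ 0 < eps0 <= 1 /\
    forall eps U X1 X2 V, 0 < eps <= eps0 -> U <= eta -> K X1 X2 ->
      exists J, is_jacobian4 (t_eps f f1 f2 delta x1 x2 x1d x2d eps) (mkpt4 U X1 X2 V) J /\
        forall S, principal_index S -> 1 - 3 * rho <= principal_minor J S <= 1 + 3 * rho.
Proof.
  intros [[M0 HM] _] rho hrho.
  set (M := Rabs M0).
  assert (hM : 0 <= M) by apply Rabs_pos.
  assert (HK : forall a b, K a b -> Rabs a <= M /\ Rabs b <= M).
  { intros a b h. destruct (HM a b h). generalize (Rle_abs M0). unfold M. lra. }
  set (Q := fun a b => Rabs a <= M + 1 /\ Rabs b <= M + 1).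
  assert (hQ : compact2 Q).
  { split.
    - exists (M + 1). intros a b h. exact h.
    - intros a b H. split.
      + apply Rnot_lt_le. intro hlt.
        destruct (H (Rabs a - (M + 1)) ltac:(lra)) as [a' [b' [[h1 _] [h2 _]]]].
        assert (Rabs a <= Rabs a' + Rabs (a - a')).
        { replace a with (a' + (a - a')) at 1 by ring. apply Rabs_triang. }
        lra.
      + apply Rnot_lt_le. intro hlt.
        destruct (H (Rabs b - (M + 1)) ltac:(lra)) as [a' [b' [[_ h1] [_ h2]]]].
        assert (Rabs b <= Rabs b' + Rabs (b - b')).
        { replace b with (b' + (b - b')) at 1 by ring. apply Rabs_triang. }
        lra. }
  destruct (Hode Q hQ) as [epsK [hepsK HodeQ]].
  destruct f_reg as [F11 [F12 [F21 [F22 [jf [jf1 [jf2 [j11 [j12 [j21 [j22 [d11 [d12 [d21 d22]]]]]]]]]]]]]].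
  destruct (bounded2 f1 (M + 2) jf1) as [G1 [hG1 HG1]].
  destruct (bounded2 f2 (M + 2) jf2) as [G2 [hG2 HG2]].
  destruct (bounded2 F11 (M + 2) j11) as [L1 [hL1 HL1]].
  destruct (bounded2 F12 (M + 2) j12) as [L2 [hL2 HL2]].
  destruct (bounded2 F21 (M + 2) j21) as [L3 [hL3 HL3]].
  destruct (bounded2 F22 (M + 2) j22) as [L4 [hL4 HL4]].
  set (G := Rmax G1 G2). set (L := Rmax (Rmax L1 L2) (Rmax L3 L4)).
  assert (hG : 0 <= G) by (unfold G; generalize (Rmax_l G1 G2); lra).
  assert (hL : 0 <= L) by (unfold L; generalize (Rmax_l (Rmax L1 L2) (Rmax L3 L4)) (Rmax_l L1 L2); lra).
  assert (HG : forall p q, Rabs p <= M + 2 -> Rabs q <= M + 2 -> Rabs (f1 p q) <= G /\ Rabs (f2 p q) <= G).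
  { intros p q hp hq. split.
    - eapply Rle_trans; [apply HG1; auto|apply Rmax_l].
    - eapply Rle_trans; [apply HG2; auto|apply Rmax_r]. }
  assert (HL : forall p q p' q', Rabs p <= M + 2 -> Rabs q <= M + 2 -> Rabs p' <= M + 2 -> Rabs q' <= M + 2 ->
     Rabs (f1 p' q' - f1 p q) <= L * (Rabs (p' - p) + Rabs (q' - q)) /\
     Rabs (f2 p' q' - f2 p q) <= L * (Rabs (p' - p) + Rabs (q' - q))).
  { intros p q p' q' hp hq hp' hq'. split.
    - apply (lip f1 F11 F12 (M + 2) L); auto. intros a b ha hb. split.
      + eapply Rle_trans; [apply HL1; auto|]. unfold L.
        eapply Rle_trans; [apply Rmax_l|apply Rmax_l].
      + eapply Rle_trans; [apply HL2; auto|]. unfold L.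
        eapply Rle_trans; [apply Rmax_r|apply Rmax_l].
    - apply (lip f2 F21 F22 (M + 2) L); auto. intros a b ha hb. split.
      + eapply Rle_trans; [apply HL3; auto|]. unfold L.
        eapply Rle_trans; [apply Rmax_l|apply Rmax_r].
      + eapply Rle_trans; [apply HL4; auto|]. unfold L.
        eapply Rle_trans; [apply Rmax_r|apply Rmax_r]. }
  destruct Hdelta as [_ [_ [_ [Cd [e0 [hCd [he0 HCd]]]]]]].
  set (W := G * Cd / 2).
  assert (hW : 0 <= W) by (unfold W; apply Rmult_le_pos; [apply Rmult_le_pos|]; lra).
  assert (hLC : 0 <= L * Cd) by (apply Rmult_le_pos; lra).
  set (T := Rmin (1 / (4 * W + 1)) (rho / (4 * (L * Cd) + 1))).
  assert (hT : 0 < T) by (apply Rmin_pos; apply Rdiv_lt_0_compat; lra).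
  assert (hTW : T * W <= 1/4).
  { assert (T <= 1 / (4 * W + 1)) by apply Rmin_l.
    assert (T * (4 * W + 1) <= 1).
    { apply (Rmult_le_compat_r (4 * W + 1)) in H; [|lra].
      replace (1 / (4 * W + 1) * (4 * W + 1)) with 1 in H by (field; lra). exact H. }
    nra. }
  assert (hTL : 4 * (T * (L * Cd)) <= rho).
  { assert (T <= rho / (4 * (L * Cd) + 1)) by apply Rmin_r.
    assert (T * (4 * (L * Cd) + 1) <= rho).
    { apply (Rmult_le_compat_r (4 * (L * Cd) + 1)) in H; [|lra].
      replace (rho / (4 * (L * Cd) + 1) * (4 * (L * Cd) + 1)) with rho in H by (field; lra). exact H. }
    nra. }
  exists (T / 2), (Rmin (Rmin 1 epsK) (Rmin (e0 / 2) (T / 2))).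
  assert (hm1 := Rmin_l (Rmin 1 epsK) (Rmin (e0 / 2) (T / 2))).
  assert (hm2 := Rmin_r (Rmin 1 epsK) (Rmin (e0 / 2) (T / 2))).
  assert (hm3 := Rmin_l 1 epsK). assert (hm4 := Rmin_r 1 epsK).
  assert (hm5 := Rmin_l (e0 / 2) (T / 2)). assert (hm6 := Rmin_r (e0 / 2) (T / 2)).
  split; [lra|]. split.
  { split; [|lra]. apply Rmin_pos; apply Rmin_pos; lra. }
  intros eps U X1 X2 V heps hU hK.
  assert (heps1 : 0 < eps <= 1) by lra.
  assert (HQe : forall a b, Rabs a <= M + 1 -> Rabs b <= M + 1 -> ODE f1 f2 delta x1 x2 x1d x2d eps a b).
  { intros a b ha hb. apply (HodeQ a b eps); [split; auto|auto|lra]. }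
  assert (hPhi : Phi delta eps eps <= Cd) by (apply HCd; lra).
  destruct (HK X1 X2 hK) as [hX1 hX2].
  destruct (row3 eps M X1 X2 V U heps1 hX1 hX2 HQe) as [l0 [l1 [l2 [r0 [r1 [r2 r3]]]]]].
  destruct (x_reg x1 x1d eps heps1 (Hx1s eps heps1) (fun a b c => Hx1d eps a b c heps1)) as
    [A1 [A2 [_ [_ [_ [_ [_ [_ [_ [_ [e1 [e2 _]]]]]]]]]]]].
  destruct (x_reg x2 x2d eps heps1 (Hx2s eps heps1) (fun a b c => Hx2d eps a b c heps1)) as
    [A1' [A2' [_ [_ [_ [_ [_ [_ [_ [_ [e1' [e2' _]]]]]]]]]]]].
  assert (hs1 : (U + eps) * W <= 1/4 \/ True) by (right; exact I).
  assert (Hs1 : (T / 2 + eps) * (G * Cd / 2) <= 1 / 4).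
  { fold W. assert ((T / 2 + eps) * W <= T * W) by (apply Rmult_le_compat_r; lra). lra. }
  assert (Hs2 : 4 * ((T / 2 + eps) * (L * Cd)) <= rho).
  { assert ((T / 2 + eps) * (L * Cd) <= T * (L * Cd)) by (apply Rmult_le_compat_r; lra). lra. }
  assert (hX1' : Rabs X1 <= M + 1/2) by lra. assert (hX2' : Rabs X2 <= M + 1/2) by lra.
  assert (hh1 : forall h, h <> 0 -> Rabs h < 1/2 -> Rabs (X1 + h) <= M + 1).
  { intros h _ hh. apply abs_le_inv in hX1. apply Rabs_def2 in hh. apply Rabs_le; lra. }
  assert (hh2 : forall h, h <> 0 -> Rabs h < 1/2 -> Rabs (X2 + h) <= M + 1).
  { intros h _ hh. apply abs_le_inv in hX2. apply Rabs_def2 in hh. apply Rabs_le; lra. }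
  assert (hX1q : Rabs X1 <= M + 1) by lra. assert (hX2q : Rabs X2 <= M + 1) by lra.
  assert (DB1 : forall h, h <> 0 -> Rabs h < 1/2 ->
     Rabs ((x1 eps (X1 + h) X2 U - x1 eps X1 X2 U) - h) + Rabs ((x2 eps (X1 + h) X2 U - x2 eps X1 X2 U) - 0)
       <= rho * Rabs h / 2).
  { intros h h0 hh.
    assert (E := Dx_bound eps X1 X2 (X1 + h) X2 Cd G L (T / 2) rho M heps1 (HQe _ _ hX1q hX2q)
       (HQe _ _ (hh1 h h0 hh) hX2q) hX1' hX2').
    replace (X1 + h - X1) with h in E by ring. rewrite Rminus_diag, Rabs_R0, Rplus_0_r in E.
    apply E; auto; try lra. apply Rabs_pos_lt; auto. }
  assert (DB2 : forall h, h <> 0 -> Rabs h < 1/2 ->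
     Rabs ((x1 eps X1 (X2 + h) U - x1 eps X1 X2 U) - 0) + Rabs ((x2 eps X1 (X2 + h) U - x2 eps X1 X2 U) - h)
       <= rho * Rabs h / 2).
  { intros h h0 hh.
    assert (E := Dx_bound eps X1 X2 X1 (X2 + h) Cd G L (T / 2) rho M heps1 (HQe _ _ hX1q hX2q)
       (HQe _ _ hX1q (hh2 h h0 hh)) hX1' hX2').
    replace (X2 + h - X2) with h in E by ring. rewrite Rminus_diag, Rabs_R0, Rplus_0_l in E.
    apply E; auto; try lra. apply Rabs_pos_lt; auto. }
  assert (qb : forall n c h, h <> 0 -> Rabs (n - c * h) <= rho * Rabs h -> Rabs (n / h - c) <= rho).
  { intros n c h h0 H. replace (n / h - c) with ((n - c * h) / h) by (field; auto).
    unfold Rdiv. rewrite Rabs_mult, Rabs_inv.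
    apply (Rmult_le_reg_r (Rabs h)); [apply Rabs_pos_lt; auto|].
    rewrite Rmult_assoc, Rinv_l, Rmult_1_r by (apply Rabs_no_R0; auto). lra. }
  assert (hrh : forall h, 0 <= rho * Rabs h) by (intros; apply Rmult_le_pos; [lra|apply Rabs_pos]).
  assert (B11 : Rabs (A1 X1 X2 U - 1) <= rho).
  { apply (lim_bound (fun s => x1 eps s X2 U) X1 _ 1 (1/2) rho); [apply e1|lra|].
    intros h h0 hh. apply qb; auto. specialize (DB1 h h0 hh).
    replace (x1 eps (X1 + h) X2 U - x1 eps X1 X2 U - 1 * h) with (x1 eps (X1 + h) X2 U - x1 eps X1 X2 U - h) by ring.
    generalize (Rabs_pos (x2 eps (X1 + h) X2 U - x2 eps X1 X2 U - 0)) (hrh h). lra. }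
  assert (B21 : Rabs (A1' X1 X2 U - 0) <= rho).
  { apply (lim_bound (fun s => x2 eps s X2 U) X1 _ 0 (1/2) rho); [apply e1'|lra|].
    intros h h0 hh. apply qb; auto. specialize (DB1 h h0 hh).
    replace (x2 eps (X1 + h) X2 U - x2 eps X1 X2 U - 0 * h) with (x2 eps (X1 + h) X2 U - x2 eps X1 X2 U - 0) by ring.
    generalize (Rabs_pos (x1 eps (X1 + h) X2 U - x1 eps X1 X2 U - h)) (hrh h). lra. }
  assert (B12 : Rabs (A2 X1 X2 U - 0) <= rho).
  { apply (lim_bound (fun s => x1 eps X1 s U) X2 _ 0 (1/2) rho); [apply e2|lra|].
    intros h h0 hh. apply qb; auto. specialize (DB2 h h0 hh).
    replace (x1 eps X1 (X2 + h) U - x1 eps X1 X2 U - 0 * h) with (x1 eps X1 (X2 + h) U - x1 eps X1 X2 U - 0) by ring.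
    generalize (Rabs_pos (x2 eps X1 (X2 + h) U - x2 eps X1 X2 U - h)) (hrh h). lra. }
  assert (B22 : Rabs (A2' X1 X2 U - 1) <= rho).
  { apply (lim_bound (fun s => x2 eps X1 s U) X2 _ 1 (1/2) rho); [apply e2'|lra|].
    intros h h0 hh. apply qb; auto. specialize (DB2 h h0 hh).
    replace (x2 eps X1 (X2 + h) U - x2 eps X1 X2 U - 1 * h) with (x2 eps X1 (X2 + h) U - x2 eps X1 X2 U - h) by ring.
    generalize (Rabs_pos (x1 eps X1 (X2 + h) U - x1 eps X1 X2 U - 0)) (hrh h). lra. }
  rewrite Rminus_0_r in B21, B12.
  exists (fun i j => match i, j with
    | O, O => 1 | O, _ => 0
    | 1%nat, O => x1d eps X1 X2 U | 1%nat, 1%nat => A1 X1 X2 U | 1%nat, 2%nat => A2 X1 X2 U | 1%nat, _ => 0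
    | 2%nat, O => x2d eps X1 X2 U | 2%nat, 1%nat => A1' X1 X2 U | 2%nat, 2%nat => A2' X1 X2 U | 2%nat, _ => 0
    | _, O => l0 | _, 1%nat => l1 | _, 2%nat => l2 | _, _ => 1 end).
  split.
  - intros i j hi hj. destruct i as [|[|[|[|i]]]]; [| | | |lia];
    destruct j as [|[|[|[|j]]]]; try lia; unfold has_partial; cbv [upd mkpt4 t_eps Nat.eqb];
    auto; try apply derivable_pt_lim_const; try apply derivable_pt_lim_id.
  - apply minors_bound; auto; lra.
Qed.

End Main.
Theorem proposition6p4
  (f f1 f2 : R -> R -> R) (delta : R -> R -> R)
  (x1 x2 x1d x2d : R -> R -> R -> R -> R)
  (Hf : smooth 2 (fun p => f (p O) (p 1%nat)))
  (Hf1 : forall a b, derivable_pt_lim (fun s => f s b) a (f1 a b))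
  (Hf2 : forall a b, derivable_pt_lim (fun s => f a s) b (f2 a b))
  (Hdelta : strict_delta_net delta)
  (Hx1s : forall eps, 0 < eps <= 1 ->
            smooth 3 (fun p => x1 eps (p O) (p 1%nat) (p 2%nat)))
  (Hx2s : forall eps, 0 < eps <= 1 ->
            smooth 3 (fun p => x2 eps (p O) (p 1%nat) (p 2%nat)))
  (Hx1d : forall eps X1 X2 U, 0 < eps <= 1 ->
            derivable_pt_lim (fun u => x1 eps X1 X2 u) U (x1d eps X1 X2 U))
  (Hx2d : forall eps X1 X2 U, 0 < eps <= 1 ->
            derivable_pt_lim (fun u => x2 eps X1 X2 u) U (x2d eps X1 X2 U))
  (Hode : forall K : R -> R -> Prop, compact2 K ->
     exists epsK, 0 < epsK /\
       forall X1 X2 eps, K X1 X2 -> 0 < eps <= 1 -> eps <= epsK ->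
         (forall U, derivable_pt_lim (fun u => x1d eps X1 X2 u) U
            (1 / 2 * f1 (x1 eps X1 X2 U) (x2 eps X1 X2 U) * delta eps U)) /\
         (forall U, derivable_pt_lim (fun u => x2d eps X1 X2 u) U
            (1 / 2 * f2 (x1 eps X1 X2 U) (x2 eps X1 X2 U) * delta eps U)) /\
         x1 eps X1 X2 (-1) = X1 /\ x2 eps X1 X2 (-1) = X2 /\
         x1d eps X1 X2 (-1) = 0 /\ x2d eps X1 X2 (-1) = 0) :
  let t := t_eps f f1 f2 delta x1 x2 x1d x2d in
  (* main claim: principal minors in (1 - d, 1 + d) *)
  (forall K : R -> R -> Prop, compact2 K -> forall d, 0 < d ->
     exists eta eps0, 0 < eta /\ 0 < eps0 <= 1 /\
       forall eps U X1 X2 V, 0 < eps <= eps0 -> U <= eta -> K X1 X2 ->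
         exists J, is_jacobian4 (t eps) (mkpt4 U X1 X2 V) J /\
           forall S, principal_index S ->
             1 - d < principal_minor J S < 1 + d) /\
  (* in particular: principal minors positive *)
  (forall K : R -> R -> Prop, compact2 K ->
     exists eta eps0, 0 < eta /\ 0 < eps0 <= 1 /\
       forall eps U X1 X2 V, 0 < eps <= eps0 -> U <= eta -> K X1 X2 ->
         exists J, is_jacobian4 (t eps) (mkpt4 U X1 X2 V) J /\
           forall S, principal_index S -> 0 < principal_minor J S) /\
  (* in particular: det o DT strictly non-zero *)
  (forall K : R -> R -> Prop, compact2 K ->
     exists eta C N eps0, 0 < eta /\ 0 < C /\ 0 < eps0 <= 1 /\
       forall eps U X1 X2 V, 0 < eps <= eps0 -> U <= eta -> K X1 X2 ->
         exists J, is_jacobian4 (t eps) (mkpt4 U X1 X2 V) J /\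
           C * eps ^ N <= Rabs (principal_minor J [0; 1; 2; 3]%nat)).
Proof.
  intros t.
  assert (C := core f f1 f2 delta x1 x2 x1d x2d Hf Hf1 Hf2 Hdelta Hx1s Hx2s Hx1d Hx2d Hode).
  split; [|split].
  - intros K hK d hd.
    destruct (C K hK (Rmin (1/4) (d/4))) as [eta [eps0 [he [he0 H]]]].
    { split; [apply Rmin_pos; lra|]. generalize (Rmin_l (1/4) (d/4)); lra. }
    exists eta, eps0. split; auto. split; auto.
    intros eps U X1 X2 V h1 h2 h3. destruct (H eps U X1 X2 V h1 h2 h3) as [J [HJ HS]].
    exists J; split; auto. intros S hS. specialize (HS S hS).
    assert (Rmin (1/4) (d/4) <= d/4) by apply Rmin_r.
    assert (0 < Rmin (1/4) (d/4)) by (apply Rmin_pos; lra). lra.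
  - intros K hK.
    destruct (C K hK (1/4)) as [eta [eps0 [he [he0 H]]]]; [lra|].
    exists eta, eps0. split; auto. split; auto.
    intros eps U X1 X2 V h1 h2 h3. destruct (H eps U X1 X2 V h1 h2 h3) as [J [HJ HS]].
    exists J; split; auto. intros S hS. specialize (HS S hS). lra.
  - intros K hK.
    destruct (C K hK (1/4)) as [eta [eps0 [he [he0 H]]]]; [lra|].
    exists eta, (1/4), 0%nat, eps0. split; auto. split; [lra|]. split; auto.
    intros eps U X1 X2 V h1 h2 h3. destruct (H eps U X1 X2 V h1 h2 h3) as [J [HJ HS]].
    exists J; split; auto.
    assert (HS' := HS [0; 1; 2; 3]%nat).
    assert (hpi : principal_index [0; 1; 2; 3]%nat).
    { split; [congruence|]. split.
      - repeat constructor; simpl; intuition lia.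
      - repeat constructor; lia. }
    specialize (HS' hpi). rewrite pow_O, Rmult_1_r. rewrite Rabs_pos_eq; lra.
Qed.
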